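(* Let $\mu\colon\mathbf 2\times\omega\to\omega$ be an injection. For every parsummable category $\mathcal C$ there is a (preferred) strong symmetric monoidal functor $\mu^*\mathcal C\to\Sigma(\mathcal C)$ which is an equivalence of underlying categories, and these functors are natural in morphisms of parsummable categories $\mathcal C\to\mathcal D$.
   Context: Let $\omega=\{1,2,\dots\}$, $\mathbf m=\{1,\dots,m\}$, $\mathcal M$ the monoid of injections $\omega\to\omega$, $E\mathcal M$ the category with objects $\mathcal M$ and unique morphisms between any two objects. A parsummable category is a small tame $E\mathcal M$-category $\mathcal C$ (strict $E\mathcal M$-action, $u_*$ the action of $u$, $[v,u]\colon u_*\Rightarrow v_*$ the isomorphism from $u\to v$; $\mathrm{supp}(X)$ the intersection of finite $A\subset\omega$ with $u_*X=X$ for all $u$ fixing $A$ pointwise; tame = all supports finite) with an object $0$ of empty support and a strictly unital, associative, commutative, $E\mathcal M$-equivariant functor $+$ on disjointly supported pairs; morphisms are strictly equivariant functors preserving $0$ and $+$. For a finite set $A$, injections $\phi,\phi'\colon A\times\omega\to\omega$ and $X_\bullet=(X_a)_{a\in A}$: $\phi_*(X_\bullet)=\sum_a\phi(a,-)_*(X_a)$, $[\phi',\phi]_{X_\bullet}=\sum_a[\phi'(a,-),\phi(a,-)]_{X_a}$. $\mu^*\mathcal C$ is the symmetric monoidal category with underlying category $\mathcal C$, tensor product $X\otimes Y=\mu_*(X,Y)$, unit $0$, left and right unit isomorphisms $[1,\mu(2,-)]_X$ and $[1,\mu(1,-)]_X$, symmetry $[\mu\circ(\pi\times\mathrm{id}),\mu]_{(X,Y)}$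 with $\pi\in\Sigma_2$ the transposition, and associator $[\mu\circ(1\amalg\mu),\mu\circ(\mu\amalg1)]_{(X,Y,Z)}$, where $(1\amalg\mu)\colon\mathbf 3\times\omega\to\mathbf 2\times\omega$ is $(1,x)\mapsto(1,x)$, $(i,x)\mapsto(2,\mu(i-1,x))$ for $i\ge2$, and $\mu\amalg1$ is defined analogously; morphisms of parsummable categories are strict symmetric monoidal functors $\mu^*\mathcal C\to\mu^*\mathcal D$. $\Sigma(\mathcal C)$ is the permutative category whose objects are finite sequences $(X_1,\dots,X_m)$ of objects of $\mathcal C$, morphisms $(X_1,\dots,X_m)\to(Y_1,\dots,Y_n)$ are classes $[\psi,f,\phi]$ ($\phi\colon\mathbf m\times\omega\to\omega$, $\psi\colon\mathbf n\times\omega\to\omega$ injections, $f\colon\phi_*(X_\bullet)\to\psi_*(Y_\bullet)$) modulo $(\psi,f,\phi)\sim(\psi',[\psi',\psi]f[\phi,\phi'],\phi')$, composition $[\rho,g,\theta][\psi,f,\phi]=[\rho,g[\theta,\psi]f,\phi]$, tensor product concatenation on objects and $[\psi,f,\phi]\otimes[\rho,g,\theta]=[\psi+\rho,f+g,\phi+\theta]$ for representatives with disjoint images ($(\phi+\theta)(i,x)=\phi(i,x)$ for $i\le m$, $\theta(i-m,x)$ otherwise), symmetry $[\bar\phi,\mathrm{id},\phi]$ with $\bar\phi(i,x)=\phi(i+m,x)$ for $i\le n$ and $\phi(i-n,x)$ otherwise; $\Sigma(F)$ applies $F$ entrywise and sends $[\psi,f,\phi]$ to $[\psi,Ff,\phi]$.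 *)

(* Defs.v *)
From Stdlib Require Import ClassicalEpsilon Relations.Relation_Operators.
From HB Require Import structures.
From mathcomp Require Import all_boot.

Set Implicit Arguments.
Unset Strict Implicit.
Unset Printing Implicit Defensive.

(* omega is modelled by nat (0-based relabelling of {1,2,...}).        *)
Record inj := Inj { injf :> nat -> nat; injfP : injective injf }.

Definition inj1 : inj := @Inj id (fun x y (e : id x = id y) => e).
Definition injM (u v : inj) : inj :=
  @Inj (u \o v) (ssrfun.inj_comp (@injfP u) (@injfP v)).

(* Raw data of a (small) EM-category with 0 and partial sum.           *)
(* (pcomp g f = g o f, meaningful when pcod f = pdom g).                *)
(* pactm v u f is the image of the morphism (u -> v, f) of EM x C under *)
(* the action functor EM x C -> C; thus u_* f = pactm u u f and          *)
(* [v,u]_X = pactm v u (pid X).                                         *)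
(* pplus / pplusm are only meaningful on disjointly supported pairs.    *)
Record PData := {
  pOb : Type;
  pMor : Type;
  pdom : pMor -> pOb;
  pcod : pMor -> pOb;
  pid : pOb -> pMor;
  pcomp : pMor -> pMor -> pMor;
  pact : inj -> pOb -> pOb;
  pactm : inj -> inj -> pMor -> pMor;
  pzero : pOb;
  pplus : pOb -> pOb -> pOb;
  pplusm : pMor -> pMor -> pMor }.

Arguments pdom {p} _.
Arguments pcod {p} _.
Arguments pid {p} _.
Arguments pcomp {p} _ _.
Arguments pact {p} _ _.
Arguments pactm {p} _ _ _.
Arguments pzero p.
Arguments pplus {p} _ _.
Arguments pplusm {p} _ _.

Definition fixes (A : seq nat) (u : inj) := forall a, a \in A -> u a = a.
Definition supports (C : PData) (A : seq nat) (X : pOb C) :=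
  forall u, fixes A u -> pact u X = X.
Definition supp (C : PData) (X : pOb C) (n : nat) :=
  forall A : seq nat, supports A X -> n \in A.
Definition disj (C : PData) (X Y : pOb C) :=
  forall n, supp X n -> supp Y n -> False.
Definition disjm (C : PData) (f g : pMor C) :=
  disj (pdom f) (pdom g) /\ disj (pcod f) (pcod g).

Record PAxioms (C : PData) : Prop := {
  ax_dom_id : forall X : pOb C, pdom (pid X) = X;
  ax_cod_id : forall X : pOb C, pcod (pid X) = X;
  ax_dom_comp : forall f g : pMor C, pcod f = pdom g -> pdom (pcomp g f) = pdom f;
  ax_cod_comp : forall f g : pMor C, pcod f = pdom g -> pcod (pcomp g f) = pcod g;
  ax_idl : forall f : pMor C, pcomp (pid (pcod f)) f = f;
  ax_idr : forall f : pMor C, pcomp f (pid (pdom f)) = f;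
  ax_assoc : forall f g h : pMor C, pcod f = pdom g -> pcod g = pdom h ->
     pcomp h (pcomp g f) = pcomp (pcomp h g) f;
  ax_act_dom : forall v u (f : pMor C), pdom (pactm v u f) = pact u (pdom f);
  ax_act_cod : forall v u (f : pMor C), pcod (pactm v u f) = pact v (pcod f);
  ax_act_id : forall u (X : pOb C), pactm u u (pid X) = pid (pact u X);
  ax_act_comp : forall w v u (f g : pMor C), pcod f = pdom g ->
     pcomp (pactm w v g) (pactm v u f) = pactm w u (pcomp g f);
  ax_act_unit_ob : forall X : pOb C, pact inj1 X = X;
  ax_act_unit_mor : forall f : pMor C, pactm inj1 inj1 f = f;
  ax_act_mul_ob : forall v v' (X : pOb C), pact (injM v v') X = pact v (pact v' X);
  ax_act_mul_mor : forall v v' u u' (f : pMor C),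
     pactm (injM v v') (injM u u') f = pactm v u (pactm v' u' f);
  ax_tame : forall X : pOb C, exists A : seq nat, forall n, supp X n -> n \in A;
  ax_zero_supp : forall n, ~ supp (pzero C) n;
  ax_plus_dom : forall f g : pMor C, disjm f g ->
     pdom (pplusm f g) = pplus (pdom f) (pdom g);
  ax_plus_cod : forall f g : pMor C, disjm f g ->
     pcod (pplusm f g) = pplus (pcod f) (pcod g);
  ax_plus_id : forall X Y : pOb C, disj X Y -> pplusm (pid X) (pid Y) = pid (pplus X Y);
  ax_plus_comp : forall f f' g g' : pMor C, disjm f f' -> disjm g g' ->
     pcod f = pdom g -> pcod f' = pdom g' ->
     pplusm (pcomp g f) (pcomp g' f') = pcomp (pplusm g g') (pplusm f f');
  ax_unitl_ob : forall X : pOb C, pplus (pzero C) X = X;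
  ax_unitr_ob : forall X : pOb C, pplus X (pzero C) = X;
  ax_unitl_mor : forall f : pMor C, pplusm (pid (pzero C)) f = f;
  ax_unitr_mor : forall f : pMor C, pplusm f (pid (pzero C)) = f;
  ax_assoc_ob : forall X Y Z : pOb C, disj X Y -> disj X Z -> disj Y Z ->
     pplus (pplus X Y) Z = pplus X (pplus Y Z);
  ax_assoc_mor : forall f g h : pMor C, disjm f g -> disjm f h -> disjm g h ->
     pplusm (pplusm f g) h = pplusm f (pplusm g h);
  ax_comm_ob : forall X Y : pOb C, disj X Y -> pplus X Y = pplus Y X;
  ax_comm_mor : forall f g : pMor C, disjm f g -> pplusm f g = pplusm g f;
  ax_equiv_ob : forall u (X Y : pOb C), disj X Y ->
     pact u (pplus X Y) = pplus (pact u X) (pact u Y);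
  ax_equiv_mor : forall v u (f g : pMor C), disjm f g ->
     pactm v u (pplusm f g) = pplusm (pactm v u f) (pactm v u g) }.

Record PCat := { pdata :> PData; pax : PAxioms pdata }.

Record PMorAx (C D : PData) (Fo : pOb C -> pOb D) (Fm : pMor C -> pMor D) : Prop := {
  fax_dom : forall f, pdom (Fm f) = Fo (pdom f);
  fax_cod : forall f, pcod (Fm f) = Fo (pcod f);
  fax_id : forall X, Fm (pid X) = pid (Fo X);
  fax_comp : forall f g, pcod f = pdom g -> Fm (pcomp g f) = pcomp (Fm g) (Fm f);
  fax_act_ob : forall u X, Fo (pact u X) = pact u (Fo X);
  fax_act_mor : forall v u f, Fm (pactm v u f) = pactm v u (Fm f);
  fax_zero : Fo (pzero C) = pzero D;
  fax_plus_ob : forall X Y, disj X Y -> Fo (pplus X Y) = pplus (Fo X) (Fo Y);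
  fax_plus_mor : forall f g, disjm f g -> Fm (pplusm f g) = pplusm (Fm f) (Fm g) }.

Record PMor (C D : PCat) := {
  Fo : pOb C -> pOb D;
  Fm : pMor C -> pMor D;
  Fax : PMorAx Fo Fm }.

(* phi_*(X_.) and [phi',phi]_{X_.} for a family of injections given by  *)
(* its sections ps a = phi(a,-), indexed by the positions a < size Xs.   *)
Definition push (C : PData) (ps : nat -> inj) (Xs : seq (pOb C)) : pOb C :=
  \big[@pplus C / pzero C]_(a < size Xs) pact (ps a) (nth (pzero C) Xs a).

Definition pushm (C : PData) (ps : nat -> inj) (fs : seq (pMor C)) : pMor C :=
  \big[@pplusm C / pid (pzero C)]_(a < size fs)
     pactm (ps a) (ps a) (nth (pid (pzero C)) fs a).

(* [ps, qs]_{Xs} : push qs Xs -> push ps Xs *)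
Definition swp (C : PData) (ps qs : nat -> inj) (Xs : seq (pOb C)) : pMor C :=
  \big[@pplusm C / pid (pzero C)]_(a < size Xs)
     pactm (ps a) (qs a) (pid (nth (pzero C) Xs a)).

(* a family of injections phi : m x omega -> omega, given by sections,  *)
(* is jointly injective (each section being injective by construction) *)
Definition jinj (m : nat) (ps : nat -> inj) :=
  forall a b x y, a < m -> b < m -> ps a x = ps b y -> a = b.

Definition fam (us : seq inj) : nat -> inj := fun a => nth inj1 us a.

(* Data of a symmetric monoidal category (morphisms up to smheq).       *)
Record SMCat := {
  smOb : Type;
  smMor : Type;
  smdom : smMor -> smOb;
  smcod : smMor -> smOb;
  smid : smOb -> smMor;
  smcomp : smMor -> smMor -> smMor;
  smheq : smMor -> smMor -> Prop;
  smtens : smOb -> smOb -> smOb;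
  smtensm : smMor -> smMor -> smMor;
  smunit : smOb;
  smlam : smOb -> smMor;   (* unit ⊗ X -> X *)
  smrho : smOb -> smMor;   (* X ⊗ unit -> X *)
  smalpha : smOb -> smOb -> smOb -> smMor; (* (X⊗Y)⊗Z -> X⊗(Y⊗Z) *)
  smbeta : smOb -> smOb -> smMor }.        (* X⊗Y -> Y⊗X *)

Arguments smdom {s} _.
Arguments smcod {s} _.
Arguments smid {s} _.
Arguments smcomp {s} _ _.
Arguments smheq {s} _ _.
Arguments smtens {s} _ _.
Arguments smtensm {s} _ _.
Arguments smunit s.
Arguments smlam {s} _.
Arguments smrho {s} _.
Arguments smalpha {s} _ _ _.
Arguments smbeta {s} _ _.

Definition ishom (S : SMCat) (f : smMor S) (X Y : smOb S) :=
  smdom f = X /\ smcod f = Y.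

Definition isiso (S : SMCat) (f : smMor S) :=
  exists g : smMor S, ishom g (smcod f) (smdom f) /\
    smheq (smcomp g f) (smid (smdom f)) /\ smheq (smcomp f g) (smid (smcod f)).

Definition musec (mu : 'I_2 * nat -> nat) (Hmu : injective mu) (i : 'I_2) : inj :=
  @Inj (fun x => mu (i, x))
       (fun x y (e : mu (i, x) = mu (i, y)) => f_equal snd (Hmu _ _ e)).

Definition mu_star (mu : 'I_2 * nat -> nat) (Hmu : injective mu) (C : PCat) : SMCat :=
  let m1 := musec Hmu ord0 in
  let m2 := musec Hmu ord_max in
  {| smOb := pOb C;
     smMor := pMor C;
     smdom := @pdom C;
     smcod := @pcod C;
     smid := @pid C;
     smcomp := @pcomp C;
     smheq := @eq (pMor C);
     smtens := fun X Y => push (fam [:: m1; m2]) [:: X; Y];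
     smtensm := fun f g => pushm (fam [:: m1; m2]) [:: f; g];
     smunit := pzero C;
     smlam := fun X => pactm inj1 m2 (pid X);
     smrho := fun X => pactm inj1 m1 (pid X);
     smalpha := fun X Y Z =>
        swp (fam [:: m1; injM m2 m1; injM m2 m2])
            (fam [:: injM m1 m1; injM m1 m2; m2]) [:: X; Y; Z];
     smbeta := fun X Y => swp (fam [:: m2; m1]) (fam [:: m1; m2]) [:: X; Y] |}.

(* Sigma(C).  A morphism is a representative (psi, f, phi) together     *)
(* with its source and target sequences; morphisms are compared modulo  *)
(* the equivalence relation generated by ~.                             *)
Record SigMor (C : PData) := {
  s_src : seq (pOb C);
  s_tgt : seq (pOb C);
  s_phi : nat -> inj;
  s_psi : nat -> inj;
  s_f : pMor C;
  s_phiP : jinj (size s_src) s_phi;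
  s_psiP : jinj (size s_tgt) s_psi;
  s_dom : pdom s_f = push s_phi s_src;
  s_cod : pcod s_f = push s_psi s_tgt }.

Definition sig_junk (C : PCat) : SigMor C.
Proof.
refine (@Build_SigMor C [::] [::] (fun _ => inj1) (fun _ => inj1) (pid (pzero C))
          _ _ _ _).
- by move=> a b x y.
- by move=> a b x y.
- by rewrite /push big_ord0 (ax_dom_id (pax C)).
- by rewrite /push big_ord0 (ax_cod_id (pax C)).
Defined.

(* builds [psi, f, phi] when this is a legitimate representative; the   *)
(* fallback branch is never used for the constructions below (they      *)
(* always produce legitimate representatives), it only avoids having to *)
(* prove this inside the definitions.                                   *)
Definition mkSig (C : PCat) (src tgt : seq (pOb C)) (phi psi : nat -> inj)
    (f : pMor C) : SigMor C :=
  match excluded_middle_informative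
     (jinj (size src) phi /\ jinj (size tgt) psi /\
      pdom f = push phi src /\ pcod f = push psi tgt) with
  | left (conj h1 (conj h2 (conj h3 h4))) =>
      @Build_SigMor C src tgt phi psi f h1 h2 h3 h4
  | right _ => sig_junk C
  end.

Definition sig_rel (C : PData) (m m' : SigMor C) :=
  s_src m = s_src m' /\ s_tgt m = s_tgt m' /\
  s_f m' = pcomp (swp (s_psi m') (s_psi m) (s_tgt m))
                 (pcomp (s_f m) (swp (s_phi m) (s_phi m') (s_src m))).

Definition canon (m : nat) (a : nat) : inj.
Proof.
refine (@Inj (fun x => x * m.+1 + a) _).
by move=> x y /addIn /eqP; rewrite eqn_pmul2r // => /eqP.
Defined.

Definition evn (u : inj) : inj.
Proof.
refine (@Inj (fun x => (u x).*2) _).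
by move=> x y /double_inj /injfP.
Defined.

Definition odn (u : inj) : inj.
Proof.
refine (@Inj (fun x => (u x).*2.+1) _).
by move=> x y [] /double_inj /injfP.
Defined.

Definition catf (m : nat) (ps qs : nat -> inj) : nat -> inj :=
  fun a => if a < m then ps a else qs (a - m).

Definition sig_id (C : PCat) (Xs : seq (pOb C)) : SigMor C :=
  mkSig Xs Xs (canon (size Xs)) (canon (size Xs)) (pid (push (canon (size Xs)) Xs)).

Definition sig_comp (C : PCat) (g f : SigMor C) : SigMor C :=
  mkSig (s_src f) (s_tgt g) (s_phi f) (s_psi g)
    (pcomp (s_f g) (pcomp (swp (s_phi g) (s_psi f) (s_tgt f)) (s_f f))).

(* tensor product: first pass to representatives with disjoint images  *)
(* (even / odd values), then take [psi+rho, f+g, phi+theta]             *)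
Definition sig_tensm (C : PCat) (m1 m2 : SigMor C) : SigMor C :=
  let phi1 := fun a => evn (s_phi m1 a) in
  let psi1 := fun a => evn (s_psi m1 a) in
  let phi2 := fun a => odn (s_phi m2 a) in
  let psi2 := fun a => odn (s_psi m2 a) in
  let f1 := pcomp (swp psi1 (s_psi m1) (s_tgt m1))
                  (pcomp (s_f m1) (swp (s_phi m1) phi1 (s_src m1))) in
  let f2 := pcomp (swp psi2 (s_psi m2) (s_tgt m2))
                  (pcomp (s_f m2) (swp (s_phi m2) phi2 (s_src m2))) in
  mkSig (s_src m1 ++ s_src m2) (s_tgt m1 ++ s_tgt m2)
        (catf (size (s_src m1)) phi1 phi2) (catf (size (s_tgt m1)) psi1 psi2)
        (pplusm f1 f2).

Definition sig_beta (C : PCat) (Xs Ys : seq (pOb C)) : SigMor C :=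
  let m := size Xs in
  let n := size Ys in
  let phi := canon (m + n) in
  let phibar := fun a => if a < n then phi (a + m) else phi (a - n) in
  mkSig (Xs ++ Ys) (Ys ++ Xs) phi phibar (pid (push phi (Xs ++ Ys))).

Definition Sigma (C : PCat) : SMCat :=
  {| smOb := seq (pOb C);
     smMor := SigMor C;
     smdom := @s_src C;
     smcod := @s_tgt C;
     smid := @sig_id C;
     smcomp := @sig_comp C;
     smheq := clos_refl_sym_trans _ (@sig_rel C);
     smtens := fun Xs Ys => Xs ++ Ys;
     smtensm := @sig_tensm C;
     smunit := [::];
     smlam := @sig_id C;
     smrho := @sig_id C;
     smalpha := fun Xs Ys Zs => sig_id (Xs ++ Ys ++ Zs);
     smbeta := @sig_beta C |}.

Record SMFun (A B : SMCat) := {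
  fo : smOb A -> smOb B;
  fm : smMor A -> smMor B;
  fmu : smOb A -> smOb A -> smMor B;  (* F X ⊗ F Y -> F (X ⊗ Y) *)
  feps : smMor B }.                   (* unit -> F unit *)

Definition is_functor (A B : SMCat) (Fo : smOb A -> smOb B) (Fm : smMor A -> smMor B) :=
  [/\ forall f, smdom (Fm f) = Fo (smdom f) /\ smcod (Fm f) = Fo (smcod f),
      forall f g, smheq f g -> smheq (Fm f) (Fm g),
      forall X, smheq (Fm (smid X)) (smid (Fo X)) &
      forall f g, smcod f = smdom g -> smheq (Fm (smcomp g f)) (smcomp (Fm g) (Fm f))].

Record strong_sym_monoidal (A B : SMCat) (F : SMFun A B) : Prop := {
  ssm_functor : is_functor (fo F) (fm F);
  ssm_mu_hom : forall X Y, ishom (fmu F X Y) (smtens (fo F X) (fo F Y)) (fo F (smtens X Y));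
  ssm_mu_iso : forall X Y, isiso (fmu F X Y);
  ssm_eps_hom : ishom (feps F) (smunit B) (fo F (smunit A));
  ssm_eps_iso : isiso (feps F);
  ssm_mu_nat : forall f g,
     smheq (smcomp (fm F (smtensm f g)) (fmu F (smdom f) (smdom g)))
           (smcomp (fmu F (smcod f) (smcod g)) (smtensm (fm F f) (fm F g)));
  ssm_assoc : forall X Y Z,
     smheq (smcomp (fm F (smalpha X Y Z))
              (smcomp (fmu F (smtens X Y) Z) (smtensm (fmu F X Y) (smid (fo F Z)))))
           (smcomp (fmu F X (smtens Y Z))
              (smcomp (smtensm (smid (fo F X)) (fmu F Y Z))
                      (smalpha (fo F X) (fo F Y) (fo F Z))));
  ssm_unitl : forall X,
     smheq (smlam (fo F X))
           (smcomp (fm F (smlam X))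
              (smcomp (fmu F (smunit A) X) (smtensm (feps F) (smid (fo F X)))));
  ssm_unitr : forall X,
     smheq (smrho (fo F X))
           (smcomp (fm F (smrho X))
              (smcomp (fmu F X (smunit A)) (smtensm (smid (fo F X)) (feps F))));
  ssm_sym : forall X Y,
     smheq (smcomp (fm F (smbeta X Y)) (fmu F X Y))
           (smcomp (fmu F Y X) (smbeta (fo F X) (fo F Y))) }.

Definition nat_iso (A B : SMCat) (Fo Go : smOb A -> smOb B)
    (Fm Gm : smMor A -> smMor B) (eta : smOb A -> smMor B) :=
  (forall X, ishom (eta X) (Fo X) (Go X) /\ isiso (eta X)) /\
  (forall f, smheq (smcomp (Gm f) (eta (smdom f))) (smcomp (eta (smcod f)) (Fm f))).

Definition cat_equivalence (A B : SMCat) (F : SMFun A B) :=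
  exists (Go : smOb B -> smOb A) (Gm : smMor B -> smMor A)
         (eta : smOb A -> smMor A) (eps : smOb B -> smMor B),
    [/\ is_functor Go Gm,
        nat_iso id (fun X => Go (fo F X)) id (fun f => Gm (fm F f)) eta &
        nat_iso (fun Y => fo F (Go Y)) id (fun f => fm F (Gm f)) id eps].

Definition smf_comp (A B C : SMCat) (G : SMFun B C) (F : SMFun A B) : SMFun A C :=
  {| fo := fun X => fo G (fo F X);
     fm := fun f => fm G (fm F f);
     fmu := fun X Y => smcomp (fm G (fmu F X Y)) (fmu G (fo F X) (fo F Y));
     feps := smcomp (fm G (feps F)) (feps G) |}.

Definition smf_eq (A B : SMCat) (F G : SMFun A B) :=
  [/\ forall X, fo F X = fo G X,
      forall f, smheq (fm F f) (fm G f),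
      forall X Y, smheq (fmu F X Y) (fmu G X Y) &
      smheq (feps F) (feps G)].

Definition mu_star_fun (mu : 'I_2 * nat -> nat) (Hmu : injective mu)
    (C D : PCat) (F : PMor C D) : SMFun (mu_star Hmu C) (mu_star Hmu D) :=
  {| fo := (Fo F : smOb (mu_star Hmu C) -> smOb (mu_star Hmu D));
     fm := (Fm F : smMor (mu_star Hmu C) -> smMor (mu_star Hmu D));
     fmu := fun X Y => @smid (mu_star Hmu D) (@smtens (mu_star Hmu D) (Fo F X) (Fo F Y));
     feps := pid (pzero D) |}.

Definition SigmaF (C D : PCat) (F : PMor C D) (m : SigMor C) : SigMor D :=
  mkSig (map (Fo F) (s_src m)) (map (Fo F) (s_tgt m)) (s_phi m) (s_psi m)
        (Fm F (s_f m)).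

Definition Sigma_fun (C D : PCat) (F : PMor C D) : SMFun (Sigma C) (Sigma D) :=
  {| fo := (map (Fo F) : smOb (Sigma C) -> smOb (Sigma D));
     fm := (@SigmaF C D F : smMor (Sigma C) -> smMor (Sigma D));
     fmu := fun (Xs Ys : seq (pOb C)) => sig_id (map (Fo F) Xs ++ map (Fo F) Ys);
     feps := sig_id [::] |}.

(* Main.v *)
Require Import Defs.
From HB Require Import structures.
From mathcomp Require Import all_boot.
From mathcomp Require Import zify.
From Stdlib Require Import ClassicalEpsilon Classical FunctionalExtensionality ProofIrrelevance Relations.Relation_Operators.
Import Defs.
Set Implicit Arguments. Unset Strict Implicit. Unset Printing Implicit Defensive.

Lemma inj_ext (u v : inj) : (forall x, u x = v x) -> u = v.
Proof.
case: u => f hf; case: v => g hg /= e.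
have E := functional_extensionality f g e; subst g.
by rewrite (proof_irrelevance _ hf hg).
Qed.

Definition maxl (A : seq nat) := foldr maxn 0 A.
Lemma in_maxl a A : a \in A -> a <= maxl A.
Proof.
elim: A => //= b A IH; rewrite in_cons => /orP [/eqP -> | h].
  by rewrite leq_maxl.
by apply: leq_trans (IH h) (leq_maxr _ _).
Qed.

Lemma eventually_big (u : inj) M : exists K, forall x, K <= x -> M <= u x.
Proof.
elim: M => [|M [K hK]]; first by exists 0.
case: (classic (exists x, u x = M)) => [[x0 hx0]|hn].
  exists (maxn K x0.+1) => x hx.
  have h1 : M <= u x by apply: hK; lia.
  have h2 : u x <> M.
    move=> e; rewrite -hx0 in e; have := injfP e; lia.
  lia.
exists K => x hx; have h1 := hK x hx.
have h2 : u x <> M by move=> e; apply: hn; exists x.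
lia.
Qed.

Section Supp.
Variable C : PCat.
Let ax := pax C.

Lemma act_mul (u v : inj) (X : pOb C) : pact u (pact v X) = pact (injM u v) X.
Proof. by rewrite (ax_act_mul_ob ax). Qed.

Definition wst (A : seq nat) (u : inj) : inj.
Proof.
refine (@Inj (fun y => if y \in A then u y else (maxl (map u A)).+1 + y) _).
move=> y z /=.
have hb : forall t, t \in A -> u t < (maxl (map u A)).+1.
  by move=> t ht; rewrite ltnS; apply: in_maxl; apply: map_f.
case: ifP => hy; case: ifP => hz.
- by move/injfP.
- move=> e; have := hb _ hy; lia.
- move=> e; have := hb _ hz; lia.
- lia.
Defined.

Lemma wst_agree A (u u' : inj) : (forall a, a \in A -> u a = u' a) -> wst A u = wst A u'.
Proof.
move=> h; apply: inj_ext => x /=.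
have -> : map u A = map u' A by apply/eq_in_map => a ha; apply: h.
by case: ifP => hx; rewrite ?h.
Qed.

Lemma act_wst (X : pOb C) A (u : inj) : supports A X -> pact u X = pact (wst A u) X.
Proof.
move=> hA.
set N := (maxl (map u A)).+1.
set M' := (maxl A).+1.
have [K hK] := eventually_big u (N + M').
set K' := maxn K M'.
have notA : forall t, M' <= t -> t \notin A.
  by move=> t ht; apply/negP => /in_maxl; rewrite /M' in ht; lia.
have sinj : injective (fun x => if x \in A then x else x + K').
  move=> x y /=; case: ifP => hx; case: ifP => hy //.
  - move=> e; subst x; have := notA (y + K'); rewrite hx; lia.
  - move=> e; subst y; have := notA (x + K'); rewrite hy; lia.
  - lia.
pose s := Inj sinj.
have big : forall x, N + M' <= u (x + K') by move=> x; apply: hK; lia.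
have tinj : injective (fun x => if x \in A then x else u (x + K') - N).
  move=> x y /=; case: ifP => hx; case: ifP => hy //.
  - move=> e; have := big y; have := in_maxl hx; lia.
  - move=> e; have := big x; have := in_maxl hy; lia.
  - move=> e; have := big x; have := big y => b1 b2.
    have e2 : u (x + K') = u (y + K') by lia.
    have := injfP e2; lia.
pose t := Inj tinj.
have hs : pact s X = X by apply: hA => a ha /=; rewrite ha.
have ht : pact t X = X by apply: hA => a ha /=; rewrite ha.
have E : injM u s = injM (wst A u) t.
  apply: inj_ext => x /=; case: ifP => hx; first by rewrite hx.
  have hn : u (x + K') - N \notin A by apply: notA; have := big x; lia.
  rewrite (negbTE hn); have := big x; rewrite -/N; lia.
by rewrite -{1}hs act_mul E -act_mul ht.
Qed.

Lemma agree_act (X : pOb C) A (u u' : inj) : supports A X ->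
  (forall a, a \in A -> u a = u' a) -> pact u X = pact u' X.
Proof.
move=> hA h; rewrite (act_wst u hA) (act_wst u' hA).
by rewrite (wst_agree h).
Qed.

Lemma supports_act A (X : pOb C) (u : inj) : supports A X -> supports (map u A) (pact u X).
Proof.
move=> hA v hv; rewrite act_mul; apply: (agree_act hA) => a ha /=.
by apply: hv; apply: map_f.
Qed.

Lemma exists_support (X : pOb C) : exists A, supports A X.
Proof.
have [B hB] := ax_tame ax X.
apply: NNPP => hn.
have h : supp X (maxl B).+1.
  by move=> A hA; exfalso; apply: hn; exists A.
have := in_maxl (hB _ h); lia.
Qed.

Lemma supports_inter A B (X : pOb C) : supports A X -> supports B X ->
  supports [seq a <- A | a \in B] X.
Proof.
move=> hA hB u hu.
set K := (maxl (A ++ B ++ map u A)).+1.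
have bK : forall t, t \in A ++ B ++ map u A -> t < K by move=> t /in_maxl; lia.
have sinj : injective (fun x => if x \in A then x else x + K).
  move=> x y /=; case: ifP => hx; case: ifP => hy //.
  - move=> e; subst x; have := bK y.+1.-1; have := bK (y + K); rewrite mem_cat hx /=; lia.
  - move=> e; subst y; have := bK (x + K); rewrite mem_cat hy /=; lia.
  - lia.
pose s := Inj sinj.
have hs : pact s X = X by apply: hA => a ha /=; rewrite ha.
set B' := map s B.
have hB' : supports B' X by have := supports_act (u:=s) hB; rewrite hs.
set K2 := (maxl (B' ++ map u A ++ [:: K])).+1.
have bK2 : forall t, t \in B' ++ map u A ++ [:: K] -> t < K2 by move=> t /in_maxl; lia.
have uA : forall a, a \in A -> u a < K.
  by move=> a ha; apply: bK; rewrite !mem_cat map_f ?orbT.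
have B'A : forall y, y \in B' -> y \notin A -> K <= y.
  move=> y /mapP [b hb ->] /=; case: ifP => hbA; first by rewrite hbA.
  move=> _; lia.
have KK2 : K < K2 by apply: bK2; rewrite !mem_cat mem_seq1 eqxx !orbT.
have vinj : injective (fun x => if x \in A then u x else if x \in B' then x else x + K2).
  move=> x y /=.
  case hx: (x \in A); case hy: (y \in A).
  - by move/injfP.
  - case hy2: (y \in B').
      by move=> e; have := uA _ hx; have := B'A _ hy2 (negbT hy); lia.
    by move=> e; have := uA _ hx; lia.
  - case hx2: (x \in B').
      by move=> e; have := uA _ hy; have := B'A _ hx2 (negbT hx); lia.
    by move=> e; have := uA _ hy; lia.
  - case hx2: (x \in B'); case hy2: (y \in B') => //.
    + by move=> e; have := bK2 x; rewrite mem_cat hx2 /=; lia.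
    + by move=> e; have := bK2 y; rewrite mem_cat hy2 /=; lia.
    + lia.
pose v := Inj vinj.
have hv : pact v X = X.
  apply: hB' => y hy /=.
  case: ifP => hyA; last by rewrite hy.
  move: hy => /mapP [b hb Eb]; move: Eb hyA => /= Eb.
  case: ifP Eb => hbA Eb; subst y.
    by move=> _; apply: hu; rewrite mem_filter hbA hb.
  move=> hbKA; have := bK (b + K); rewrite mem_cat hbKA /=; lia.
transitivity (pact v X); last exact: hv.
apply: (agree_act hA) => a ha /=; by rewrite ha.
Qed.
End Supp.


Section Supp2.
Variable C : PCat.
Let ax := pax C.

Lemma zero_support : supports [::] (pzero C).
Proof.
have [A hA] := exists_support (pzero C).
suff h : forall n (A : seq nat), size A <= n -> supports A (pzero C) -> supports [::] (pzero C).
  by apply: (h (size A) A).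
clear A hA; elim=> [|n IH] A.
  by rewrite leqn0 => /eqP /size0nil ->.
case: A => [|a A] // hs hA.
have : ~ supp (pzero C) a by apply: (ax_zero_supp ax).
move=> hn; have [B hn'] := not_all_ex_not _ _ hn.
have [hB haB] := imply_to_and _ _ hn'.
have := supports_inter hA hB => /=.
have -> : (a \in B) = false by apply/negP.
move=> h; apply: (IH _ _ h).
by rewrite size_filter (leq_trans (count_size _ _)).
Qed.

Lemma act_zero (u : inj) : pact u (pzero C) = pzero C.
Proof. by apply: zero_support. Qed.

Definition sin (X : pOb C) (S : nat -> Prop) :=
  exists A, supports A X /\ forall n, n \in A -> S n.

Lemma sin_disj X Y S T : sin X S -> sin Y T -> (forall n, S n -> T n -> False) -> disj X Y.
Proof.
move=> [A [hA hAS]] [B [hB hBT]] h n hX hY.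
exact: (h n (hAS _ (hX _ hA)) (hBT _ (hY _ hB))).
Qed.

Lemma sin_act X (u : inj) (S : nat -> Prop) : (forall x, S (u x)) -> sin (pact u X) S.
Proof.
move=> hS; have [A hA] := exists_support X.
exists (map u A); split; first exact: supports_act.
by move=> n /mapP [x _ ->].
Qed.

Lemma sin_plus X Y (S : nat -> Prop) : disj X Y -> sin X S -> sin Y S -> sin (pplus X Y) S.
Proof.
move=> d [A [hA hAS]] [B [hB hBS]]; exists (A ++ B); split.
  move=> u hu; rewrite (ax_equiv_ob ax _ d) hA ?hB //.
    by move=> b hb; apply: hu; rewrite mem_cat hb orbT.
  by move=> b hb; apply: hu; rewrite mem_cat hb.
by move=> n; rewrite mem_cat => /orP [] h; auto.
Qed.

Lemma sin_zero S : sin (pzero C) S.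
Proof. by exists [::]; split; first exact: zero_support. Qed.

Lemma sin_weak X (S T : nat -> Prop) : (forall n, S n -> T n) -> sin X S -> sin X T.
Proof. by move=> h [A [hA hS]]; exists A; split; auto. Qed.

Lemma disj_zero (X : pOb C) : disj X (pzero C).
Proof. by move=> n _ h; apply: (ax_zero_supp ax h). Qed.
Lemma disj_zero' (X : pOb C) : disj (pzero C) X.
Proof. by move=> n h _; apply: (ax_zero_supp ax h). Qed.

Lemma disj_sym (X Y : pOb C) : disj X Y -> disj Y X.
Proof. by move=> h n a b; apply: (h n b a). Qed.

End Supp2.


Definition shift (ps : nat -> inj) : nat -> inj := fun a => ps a.+1.

Lemma jinj_shift n ps : jinj n.+1 ps -> jinj n (shift ps).
Proof. move=> h a b x y ha hb /h; rewrite /shift => e; have := e _ _; lia. Qed.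

Lemma jinj_le n m ps : n <= m -> jinj m ps -> jinj n ps.
Proof. move=> le h a b x y ha hb; apply: h; lia. Qed.

Lemma jinj_ext n ps qs : (forall a, a < n -> ps a = qs a) -> jinj n ps -> jinj n qs.
Proof. by move=> e h a b x y ha hb; rewrite -!e //; apply: h. Qed.

Lemma shift_catf n ps qs : shift (catf n.+1 ps qs) = catf n (shift ps) qs.
Proof. by apply: functional_extensionality => a; rewrite /shift /catf ltnS subSS. Qed.

Lemma catf0 ps qs : catf 0 ps qs = qs.
Proof. by apply: functional_extensionality => a; rewrite /catf ltn0 subn0. Qed.

Lemma catf_split n F : catf n F (fun a => F (a + n)) = F.
Proof.
apply: functional_extensionality => a; rewrite /catf; case: ifP => // h.
by rewrite subnK // leqNgt h.
Qed.

Lemma jinj_catl n m ps qs : jinj (n + m) (catf n ps qs) -> jinj n ps.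
Proof.
move=> h a b x y ha hb e; apply: (h a b x y); try lia.
by rewrite /catf ha hb.
Qed.

Lemma jinj_catr n m ps qs : jinj (n + m) (catf n ps qs) -> jinj m qs.
Proof.
move=> h a b x y ha hb e.
have := h (a + n) (b + n) x y; rewrite /catf !addnK.
have -> : (a + n < n) = false by lia.
have -> : (b + n < n) = false by lia.
move=> /(_ _ _ e); lia.
Qed.

Lemma jinj_catd n m ps qs a b x y : jinj (n + m) (catf n ps qs) -> a < n -> b < m ->
  ps a x = qs b y -> False.
Proof.
move=> h ha hb e.
have := h a (b + n) x y; rewrite /catf addnK ha.
have -> : (b + n < n) = false by lia.
move=> /(_ _ _ e); lia.
Qed.

Lemma jinj_catI n m ps qs : jinj n ps -> jinj m qs ->
  (forall a b x y, a < n -> b < m -> ps a x = qs b y -> False) ->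
  jinj (n + m) (catf n ps qs).
Proof.
move=> h1 h2 hd a b x y ha hb; rewrite /catf.
case: ifP => han; case: ifP => hbn.
- exact: h1.
- move=> e; exfalso; apply: (hd a (b - n) x y) => //; lia.
- move=> e; exfalso; apply: (hd b (a - n) y x) => //; lia.
- move=> e; have := h2 (a - n) (b - n) x y; move=> /(_ _ _ e); lia.
Qed.

Definition rng n (ps : nat -> inj) : nat -> Prop := fun k => exists a x, a < n /\ k = ps a x.

Section Lists.
Variable C : PCat.
Let ax := pax C.

Fixpoint pushl (ps : nat -> inj) (Xs : seq (pOb C)) : pOb C :=
  match Xs with
  | [::] => pzero C
  | X :: Xs' => pplus (pact (ps 0) X) (pushl (shift ps) Xs')
  end.

Fixpoint SWl (vs us : nat -> inj) (fs : seq (pMor C)) : pMor C :=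
  match fs with
  | [::] => pid (pzero C)
  | f :: fs' => pplusm (pactm (vs 0) (us 0) f) (SWl (shift vs) (shift us) fs')
  end.

Lemma pushE ps Xs : push ps Xs = pushl ps Xs.
Proof.
elim: Xs ps => [|X Xs IH] ps; first by rewrite /push big_ord0.
rewrite /push /= big_ord_recl /=; congr pplus; rewrite -IH /push.
by apply: eq_bigr => i _; rewrite /bump leq0n add1n add0n.
Qed.

Lemma SWlE (vs us : nat -> inj) fs :
  \big[@pplusm C / pid (pzero C)]_(a < size fs) pactm (vs a) (us a) (nth (pid (pzero C)) fs a)
  = SWl vs us fs.
Proof.
elim: fs vs us => [|f fs IH] vs us; first by rewrite big_ord0.
rewrite /= big_ord_recl /=; congr pplusm; rewrite -IH.
by apply: eq_bigr => i _; rewrite /bump leq0n add1n add0n.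
Qed.

Lemma pushmE ps fs : pushm ps fs = SWl ps ps fs.
Proof. exact: SWlE. Qed.

Lemma swpE ps qs Xs : swp ps qs Xs = SWl ps qs (map pid Xs).
Proof.
rewrite -SWlE /swp size_map; apply: eq_bigr => i _.
by rewrite (nth_map (pzero C)).
Qed.

Lemma sin_pushl ps Xs : jinj (size Xs) ps -> sin (pushl ps Xs) (rng (size Xs) ps).
Proof.
elim: Xs ps => [|X Xs IH] ps hj /=; first exact: sin_zero.
have hj' := jinj_shift hj.
have s1 : sin (pact (ps 0) X) (rng (size Xs).+1 ps).
  by apply: sin_act => x; exists 0, x.
have s2 : sin (pushl (shift ps) Xs) (rng (size Xs).+1 ps).
  apply: sin_weak (IH _ hj') => k [a [x [ha ->]]]; exists a.+1, x; split => //.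
apply: sin_plus => //.
apply: (sin_disj (S := fun k => exists x, k = ps 0 x)) (IH _ hj') _.
  by apply: sin_act => x; exists x.
move=> k [x ->] [a [y [ha e]]]; rewrite /shift in e.
by have := hj 0 a.+1 x y (ltn0Sn _) ha e.
Qed.

Lemma disj_head ps X Xs : jinj (size Xs).+1 ps -> disj (pact (ps 0) X) (pushl (shift ps) Xs).
Proof.
move=> hj; have hj' := jinj_shift hj.
apply: (sin_disj (S := fun k => exists x, k = ps 0 x)) (sin_pushl hj') _.
  by apply: sin_act => x; exists x.
move=> k [x ->] [a [y [ha e]]]; rewrite /shift in e.
by have := hj 0 a.+1 x y (ltn0Sn _) ha e.
Qed.

Lemma SWl_hom vs us fs : jinj (size fs) vs -> jinj (size fs) us ->
  pdom (SWl vs us fs) = pushl us (map pdom fs) /\ pcod (SWl vs us fs) = pushl vs (map pcod fs).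
Proof.
elim: fs vs us => [|f fs IH] vs us hv hu /=.
  by rewrite (ax_dom_id ax) (ax_cod_id ax).
have [d1 c1] := IH _ _ (jinj_shift hv) (jinj_shift hu).
have dj : disjm (pactm (vs 0) (us 0) f) (SWl (shift vs) (shift us) fs).
  split; rewrite ?(ax_act_dom ax) ?(ax_act_cod ax) ?d1 ?c1; apply: disj_head; by rewrite size_map.
by rewrite (ax_plus_dom ax dj) (ax_plus_cod ax dj) d1 c1 (ax_act_dom ax) (ax_act_cod ax).
Qed.

Lemma SWl_id us Xs : jinj (size Xs) us -> SWl us us (map pid Xs) = pid (pushl us Xs).
Proof.
elim: Xs us => [|X Xs IH] us hu //=.
rewrite IH; last exact: jinj_shift hu.
rewrite (ax_act_id ax) (ax_plus_id ax) //.
exact: disj_head.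
Qed.

Lemma map_dom_pid (Xs : seq (pOb C)) : map pdom (map pid Xs) = Xs.
Proof. by elim: Xs => //= X Xs ->; rewrite (ax_dom_id ax). Qed.
Lemma map_cod_pid (Xs : seq (pOb C)) : map pcod (map pid Xs) = Xs.
Proof. by elim: Xs => //= X Xs ->; rewrite (ax_cod_id ax). Qed.

Lemma SWl_hom_pid vs us Xs : jinj (size Xs) vs -> jinj (size Xs) us ->
  pdom (SWl vs us (map pid Xs)) = pushl us Xs /\ pcod (SWl vs us (map pid Xs)) = pushl vs Xs.
Proof.
move=> hv hu; have := SWl_hom (fs := map pid Xs); rewrite size_map map_dom_pid map_cod_pid.
by apply.
Qed.

Lemma SWl_swp_comp a b c Xs : jinj (size Xs) a -> jinj (size Xs) b -> jinj (size Xs) c ->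
  pcomp (SWl a b (map pid Xs)) (SWl b c (map pid Xs)) = SWl a c (map pid Xs).
Proof.
elim: Xs a b c => [|X Xs IH] a b c ha hb hc /=.
  by have := ax_idl ax (pid (pzero C)); rewrite (ax_cod_id ax).
have ha' := jinj_shift ha; have hb' := jinj_shift hb; have hc' := jinj_shift hc.
have [d1 c1] := SWl_hom_pid hb' hc'.
have [d2 c2] := SWl_hom_pid ha' hb'.
have H1 : disjm (pactm (b 0) (c 0) (pid X)) (SWl (shift b) (shift c) [seq pid i | i <- Xs]).
  split; rewrite ?(ax_act_dom ax) ?(ax_act_cod ax) ?d1 ?c1 ?(ax_dom_id ax) ?(ax_cod_id ax);
  exact: disj_head.
have H2 : disjm (pactm (a 0) (b 0) (pid X)) (SWl (shift a) (shift b) [seq pid i | i <- Xs]).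
  split; rewrite ?(ax_act_dom ax) ?(ax_act_cod ax) ?d2 ?c2 ?(ax_dom_id ax) ?(ax_cod_id ax);
  exact: disj_head.
have H3 : pcod (pactm (b 0) (c 0) (pid X)) = pdom (pactm (a 0) (b 0) (pid X)).
  by rewrite (ax_act_cod ax) (ax_act_dom ax) (ax_cod_id ax) (ax_dom_id ax).
have H4 : pcod (SWl (shift b) (shift c) [seq pid i | i <- Xs]) =
          pdom (SWl (shift a) (shift b) [seq pid i | i <- Xs]) by rewrite c1 d2.
rewrite -(ax_plus_comp ax H1 H2 H3 H4) IH // (ax_act_comp ax); last first.
  by rewrite (ax_cod_id ax) (ax_dom_id ax).
by have := ax_idl ax (pid X); rewrite (ax_cod_id ax) => ->.
Qed.

Lemma pushl_ext ps qs Xs : (forall a, a < size Xs -> ps a = qs a) -> pushl ps Xs = pushl qs Xs.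
Proof.
elim: Xs ps qs => [|X Xs IH] ps qs //= h.
rewrite h // (IH (shift ps) (shift qs)) // => a ha; apply: h; rewrite /=; lia.
Qed.

Lemma SWl_ext vs us vs' us' fs : (forall a, a < size fs -> vs a = vs' a /\ us a = us' a) ->
  SWl vs us fs = SWl vs' us' fs.
Proof.
elim: fs vs us vs' us' => [|f fs IH] vs us vs' us' //= h.
have [-> ->] := h 0 isT.
rewrite (IH (shift vs) (shift us) (shift vs') (shift us')) // => a ha; apply: h; rewrite /=; lia.
Qed.

Lemma disj_act_pushl (u : inj) X qs Ys : jinj (size Ys) qs ->
  (forall b x y, b < size Ys -> u x = qs b y -> False) -> disj (pact u X) (pushl qs Ys).
Proof.
move=> hj hd; apply: (sin_disj (S := fun k => exists x, k = u x)) (sin_pushl hj) _.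
  by apply: sin_act => x; exists x.
by move=> k [x ->] [b [y [hb e]]]; apply: (hd b x y).
Qed.

Lemma disj_pushl_cat ps qs Xs Ys : jinj (size Xs + size Ys) (catf (size Xs) ps qs) ->
  disj (pushl ps Xs) (pushl qs Ys).
Proof.
move=> hj; apply: sin_disj (sin_pushl (jinj_catl hj)) (sin_pushl (jinj_catr hj)) _.
move=> k [a [x [ha ->]]] [b [y [hb e]]]; exact: (jinj_catd hj ha hb e).
Qed.

Lemma jinj_cat_shift ps qs (X : pOb C) (Xs Ys : seq (pOb C)) :
  jinj (size (X :: Xs) + size Ys) (catf (size (X :: Xs)) ps qs) ->
  jinj (size Xs + size Ys) (catf (size Xs) (shift ps) qs).
Proof. by move=> hj; rewrite -shift_catf; apply: (jinj_shift (n := size Xs + size Ys)). Qed.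

Lemma pushl_cat ps qs Xs Ys : jinj (size Xs + size Ys) (catf (size Xs) ps qs) ->
  pushl (catf (size Xs) ps qs) (Xs ++ Ys) = pplus (pushl ps Xs) (pushl qs Ys).
Proof.
elim: Xs ps => [|X Xs IH] ps hj /=.
  by rewrite catf0 (ax_unitl_ob ax).
have hj' := jinj_cat_shift hj.
rewrite shift_catf IH // /catf /= -/(catf _ _ _).
have hl := jinj_catl hj; have hr := jinj_catr hj.
rewrite (ax_assoc_ob ax) //.
- exact: disj_head.
- apply: disj_act_pushl => // b x y hb e.
  by apply: (jinj_catd hj (a := 0) (b := b) (x := x) (y := y)).
- exact: disj_pushl_cat.
Qed.

Lemma SWl_cat v v' u u' fs gs :
  jinj (size fs + size gs) (catf (size fs) v v') ->
  jinj (size fs + size gs) (catf (size fs) u u') ->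
  SWl (catf (size fs) v v') (catf (size fs) u u') (fs ++ gs) = pplusm (SWl v u fs) (SWl v' u' gs).
Proof.
elim: fs v u => [|f fs IH] v u hv hu /=.
  by rewrite !catf0 (ax_unitl_mor ax).
have hv' : jinj (size fs + size gs) (catf (size fs) (shift v) v').
  by rewrite -shift_catf; apply: (jinj_shift (n := size fs + size gs)).
have hu' : jinj (size fs + size gs) (catf (size fs) (shift u) u').
  by rewrite -shift_catf; apply: (jinj_shift (n := size fs + size gs)).
rewrite !shift_catf IH // /catf /= -!/(catf _ _ _).
have hvl := jinj_catl hv; have hvr := jinj_catr hv.
have hul := jinj_catl hu; have hur := jinj_catr hu.
have [d1 c1] := SWl_hom (jinj_shift hvl) (jinj_shift hul).
have [d2 c2] := SWl_hom hvr hur.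
rewrite (ax_assoc_mor ax) //.
- split; rewrite ?(ax_act_dom ax) ?(ax_act_cod ax) ?d1 ?c1; apply: disj_head; by rewrite size_map.
- split; rewrite ?(ax_act_dom ax) ?(ax_act_cod ax) ?d2 ?c2; apply: disj_act_pushl; rewrite ?size_map //.
  + by move=> b x y hb e; apply: (jinj_catd hu (a := 0) (b := b) (x := x) (y := y)).
  + by move=> b x y hb e; apply: (jinj_catd hv (a := 0) (b := b) (x := x) (y := y)).
- split; rewrite ?d1 ?c1 ?d2 ?c2; apply: disj_pushl_cat; rewrite !size_map //.
Qed.

Lemma push_cat ps qs (Xs Ys : seq (pOb C)) : jinj (size Xs + size Ys) (catf (size Xs) ps qs) ->
  push (catf (size Xs) ps qs) (Xs ++ Ys) = pplus (push ps Xs) (push qs Ys).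
Proof. by rewrite !pushE; apply: pushl_cat. Qed.

Lemma swp_cat a b c d (Xs Ys : seq (pOb C)) :
  jinj (size Xs + size Ys) (catf (size Xs) a b) ->
  jinj (size Xs + size Ys) (catf (size Xs) c d) ->
  swp (catf (size Xs) a b) (catf (size Xs) c d) (Xs ++ Ys) = pplusm (swp a c Xs) (swp b d Ys).
Proof.
move=> h1 h2; rewrite !swpE map_cat.
have := SWl_cat (fs := map pid Xs) (gs := map pid Ys) (v := a) (v' := b) (u := c) (u' := d).
by rewrite !size_map; apply.
Qed.

Lemma swp_hom ps qs (Xs : seq (pOb C)) : jinj (size Xs) ps -> jinj (size Xs) qs ->
  pdom (swp ps qs Xs) = push qs Xs /\ pcod (swp ps qs Xs) = push ps Xs.
Proof. by move=> h1 h2; rewrite swpE !pushE; apply: SWl_hom_pid. Qed.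

Lemma swp_comp a b c (Xs : seq (pOb C)) : jinj (size Xs) a -> jinj (size Xs) b -> jinj (size Xs) c ->
  pcomp (swp a b Xs) (swp b c Xs) = swp a c Xs.
Proof. by move=> *; rewrite !swpE SWl_swp_comp. Qed.

Lemma swp_id a (Xs : seq (pOb C)) : jinj (size Xs) a -> swp a a Xs = pid (push a Xs).
Proof. by move=> h; rewrite swpE pushE SWl_id. Qed.

Lemma push_ext ps qs (Xs : seq (pOb C)) : (forall a, a < size Xs -> ps a = qs a) -> push ps Xs = push qs Xs.
Proof. by move=> h; rewrite !pushE; apply: pushl_ext. Qed.

Lemma swp_ext a b a' b' (Xs : seq (pOb C)) : (forall i, i < size Xs -> a i = a' i /\ b i = b' i) ->
  swp a b Xs = swp a' b' Xs.
Proof. by move=> h; rewrite !swpE; apply: SWl_ext => i; rewrite size_map; apply: h. Qed.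

Lemma sin_push ps (Xs : seq (pOb C)) : jinj (size Xs) ps -> sin (push ps Xs) (rng (size Xs) ps).
Proof. by rewrite pushE; apply: sin_pushl. Qed.

End Lists.


Lemma jinj_canon n : jinj n (canon n).
Proof.
move=> a b x y ha hb /= e.
have := congr1 (fun k => k %% n.+1) e => /=.
rewrite !modnMDl !modn_small //; lia.
Qed.

Definition R (n : nat) : nat -> inj := if n == 1 then (fun _ => inj1) else canon n.

Lemma jinj_R n : jinj n (R n).
Proof.
rewrite /R; case: eqP => [->|_]; last exact: jinj_canon.
by move=> a b x y ha hb; lia.
Qed.

Lemma jinj_one (ps : nat -> inj) : jinj 1 ps.
Proof. by move=> a b x y ha hb; lia. Qed.

Lemma jinj_zero (ps : nat -> inj) : jinj 0 ps.
Proof. by move=> a b x y ha hb; lia. Qed.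

Section Sig.
Variable C : PCat.
Let ax := pax C.

Definition hom (f : pMor C) X Y := pdom f = X /\ pcod f = Y.

Lemma hom_comp f g X Y Z : hom f X Y -> hom g Y Z -> hom (pcomp g f) X Z.
Proof.
move=> [d1 c1] [d2 c2]; split.
  by rewrite (ax_dom_comp ax) // c1 d2.
by rewrite (ax_cod_comp ax) // c1 d2.
Qed.

Lemma compA f g h X Y Z W : hom f X Y -> hom g Y Z -> hom h Z W ->
  pcomp h (pcomp g f) = pcomp (pcomp h g) f.
Proof. move=> [d1 c1] [d2 c2] [d3 c3]; apply: (ax_assoc ax); congruence. Qed.

Lemma comp_idl f X Y : hom f X Y -> pcomp (pid Y) f = f.
Proof. by move=> [_ <-]; apply: (ax_idl ax). Qed.

Lemma comp_idr f X Y : hom f X Y -> pcomp f (pid X) = f.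
Proof. by move=> [<- _]; apply: (ax_idr ax). Qed.

Lemma hom_pid X : hom (pid X) X X.
Proof. by split; rewrite ?(ax_dom_id ax) ?(ax_cod_id ax). Qed.

Lemma hom_swp ps qs (Xs : seq (pOb C)) : jinj (size Xs) ps -> jinj (size Xs) qs ->
  hom (swp ps qs Xs) (push qs Xs) (push ps Xs).
Proof. exact: swp_hom. Qed.

Lemma hom_act v u f X Y : hom f X Y -> hom (pactm v u f) (pact u X) (pact v Y).
Proof. by move=> [d c]; split; rewrite ?(ax_act_dom ax) ?(ax_act_cod ax) ?d ?c. Qed.

Lemma hom_plus f g X Y X' Y' : hom f X Y -> hom g X' Y' -> disj X X' -> disj Y Y' ->
  hom (pplusm f g) (pplus X X') (pplus Y Y').
Proof.
move=> [d1 c1] [d2 c2] h1 h2.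
have dj : disjm f g by split; rewrite ?d1 ?d2 ?c1 ?c2.
by split; rewrite ?(ax_plus_dom ax dj) ?(ax_plus_cod ax dj) ?d1 ?d2 ?c1 ?c2.
Qed.

Lemma plus_comp f f' g g' X X' Y Y' Z Z' :
  hom f X Y -> hom f' X' Y' -> hom g Y Z -> hom g' Y' Z' ->
  disj X X' -> disj Y Y' -> disj Z Z' ->
  pcomp (pplusm g g') (pplusm f f') = pplusm (pcomp g f) (pcomp g' f').
Proof.
move=> [d1 c1] [d2 c2] [d3 c3] [d4 c4] h1 h2 h3.
symmetry; apply: (ax_plus_comp ax); try split; rewrite ?d1 ?d2 ?d3 ?d4 ?c1 ?c2 ?c3 ?c4 //.
Qed.

Lemma sandwich p q r x y z (s t : seq (pOb C)) f :
  jinj (size t) p -> jinj (size t) q -> jinj (size t) r ->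
  jinj (size s) x -> jinj (size s) y -> jinj (size s) z ->
  hom f (push x s) (push r t) ->
  pcomp (swp p q t) (pcomp (pcomp (swp q r t) (pcomp f (swp x y s))) (swp y z s)) =
  pcomp (swp p r t) (pcomp f (swp x z s)).
Proof.
move=> hp hq hr hx hy hz hf.
have h1 := hom_swp hp hq; have h2 := hom_swp hq hr; have h3 := hom_swp hx hy.
have h4 := hom_swp hy hz.
rewrite -(compA h4 (hom_comp h3 hf) h2) -(compA h4 h3 hf).
rewrite swp_comp // (compA (hom_comp (hom_swp hx hz) hf) h2 h1).
by rewrite swp_comp.
Qed.

Definition Pl (Xs : seq (pOb C)) := push (R (size Xs)) Xs.

Definition Gm (m : SigMor C) : pMor C :=
  pcomp (swp (R (size (s_tgt m))) (s_psi m) (s_tgt m))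
        (pcomp (s_f m) (swp (s_phi m) (R (size (s_src m))) (s_src m))).

Lemma hom_f (m : SigMor C) : hom (s_f m) (push (s_phi m) (s_src m)) (push (s_psi m) (s_tgt m)).
Proof. by split; [apply: s_dom | apply: s_cod]. Qed.

Lemma hom_Gm (m : SigMor C) : hom (Gm m) (Pl (s_src m)) (Pl (s_tgt m)).
Proof.
rewrite /Gm /Pl.
have h1 := hom_swp ((@s_phiP _ m)) ((@jinj_R (size (s_src m)))).
have h2 := hom_swp ((@jinj_R (size (s_tgt m)))) ((@s_psiP _ m)).
have := hom_comp (hom_comp h1 (hom_f m)) h2. by [].
Qed.

Lemma mkSigE src tgt phi psi (f : pMor C) :
  jinj (size src) phi -> jinj (size tgt) psi -> pdom f = push phi src -> pcod f = push psi tgt ->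
  let m := mkSig src tgt phi psi f in
  [/\ s_src m = src, s_tgt m = tgt, s_phi m = phi, s_psi m = psi & s_f m = f].
Proof.
move=> h1 h2 h3 h4; rewrite /mkSig.
case: excluded_middle_informative => [[a [b [c d]]]|hn] //.
by exfalso; apply: hn.
Qed.

Lemma Gm_mk src tgt phi psi (f : pMor C) :
  jinj (size src) phi -> jinj (size tgt) psi -> pdom f = push phi src -> pcod f = push psi tgt ->
  Gm (mkSig src tgt phi psi f) =
  pcomp (swp (R (size tgt)) psi tgt) (pcomp f (swp phi (R (size src)) src)).
Proof.
move=> h1 h2 h3 h4; have [e1 e2 e3 e4 e5] := mkSigE h1 h2 h3 h4.
by rewrite /Gm e1 e2 e3 e4 e5.
Qed.

Lemma Gm_heq (m m' : SigMor C) : s_src m = s_src m' -> s_tgt m = s_tgt m' -> Gm m = Gm m' ->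
  clos_refl_sym_trans _ (@sig_rel C) m m'.
Proof.
move=> hs ht hG; apply: rst_step; split => //; split => //.
have hf := hom_f m; have hf' := hom_f m'.
move: hG; rewrite /Gm -hs -ht.
have hRs := (@jinj_R (size (s_src m))); have hRt := (@jinj_R (size (s_tgt m))).
have := (@s_phiP _ m); have := (@s_psiP _ m); have := (@s_phiP _ m'); have := (@s_psiP _ m').
rewrite -hs -ht in hf' * => q' p' q p.
move=> E.
have K := sandwich q' hRt q' p' hRs p' hf'.
rewrite -E sandwich // in K.
rewrite !swp_id // in K.
rewrite (comp_idr hf') (comp_idl hf') in K.
by rewrite K.
Qed.

Lemma sig_rel_Gm (m m' : SigMor C) : sig_rel m m' -> Gm m = Gm m'.
Proof.
move=> [hs [ht E]]; rewrite /Gm E -hs -ht.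
rewrite sandwich //.
all: first [exact: jinj_R | exact: (@s_phiP _ m) | exact: (@s_psiP _ m) |
  (rewrite hs; exact: (@s_phiP _ m')) | (rewrite ht; exact: (@s_psiP _ m')) | exact: hom_f].
Qed.

Lemma heq_Gm (m m' : SigMor C) : clos_refl_sym_trans _ (@sig_rel C) m m' -> Gm m = Gm m'.
Proof.
elim=> [x y /sig_rel_Gm | x | x y _ -> | x y z _ -> _ ->] //.
Qed.

Lemma heq_src (m m' : SigMor C) : clos_refl_sym_trans _ (@sig_rel C) m m' ->
  s_src m = s_src m' /\ s_tgt m = s_tgt m'.
Proof.
elim=> [x y [a [b _]] | x | x y _ [-> ->] | x y z _ [-> ->] _ [-> ->]] //.
Qed.

End Sig.


Lemma compA2 (C : PCat) (f g h : pMor C) : pcod f = pdom g -> pcod g = pdom h ->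
  pcomp h (pcomp g f) = pcomp (pcomp h g) f.
Proof. by move=> *; apply: (ax_assoc (pax C)). Qed.

Lemma homc (C : PCat) (f : pMor C) X Y : hom f X Y -> pcod f = Y. Proof. by case. Qed.
Lemma homd (C : PCat) (f : pMor C) X Y : hom f X Y -> pdom f = X. Proof. by case. Qed.

Create HintDb homdb.
#[export] Hint Resolve hom_comp hom_swp hom_pid hom_act hom_f hom_Gm jinj_R s_phiP s_psiP : homdb.
Ltac homs := solve [eauto 10 with homdb].

Ltac cd := match goal with |- pcod ?f = pdom ?g =>
   let H1 := fresh "H" in let H2 := fresh "H" in
   eassert (H1 : hom f _ _) by homs; eassert (H2 : hom g _ _) by homs;
   rewrite (homc H1) (homd H2); clear H1 H2; try reflexivity
 | |- pcod ?f = _ => let H1 := fresh "H" in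
   eassert (H1 : hom f _ _) by homs; rewrite (homc H1); clear H1; try reflexivity
 | |- pdom ?f = _ => let H1 := fresh "H" in
   eassert (H1 : hom f _ _) by homs; rewrite (homd H1); clear H1; try reflexivity
 end.

Ltac rassoc := repeat match goal with |- context [pcomp (pcomp ?h ?g) ?f] =>
   rewrite -(@compA2 _ f g h); [|cd|cd] end.

Lemma swp_comp_r (C : PCat) a b c (Xs : seq (pOb C)) k :
  jinj (size Xs) a -> jinj (size Xs) b -> jinj (size Xs) c -> pcod k = push c Xs ->
  pcomp (swp a b Xs) (pcomp (swp b c Xs) k) = pcomp (swp a c Xs) k.
Proof.
move=> ha hb hc hk; rewrite compA2 ?swp_comp //.
  by rewrite hk; have [] := swp_hom hb hc.
by have [d1 c1] := swp_hom hb hc; have [d2 c2] := swp_hom ha hb; rewrite c1 d2.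
Qed.

Section Sig2.
Variable C : PCat.
Let ax := pax C.

Lemma Gm_comp (g f : SigMor C) : s_tgt f = s_src g ->
  [/\ s_src (sig_comp g f) = s_src f, s_tgt (sig_comp g f) = s_tgt g &
      Gm (sig_comp g f) = pcomp (Gm g) (Gm f)].
Proof.
move=> e.
have hf := hom_f f; have hg := hom_f g.
have pf := @s_phiP _ f; have qf := @s_psiP _ f; have pg := @s_phiP _ g; have qg := @s_psiP _ g.
rewrite -e in pg hg.
have hc : hom (pcomp (s_f g) (pcomp (swp (s_phi g) (s_psi f) (s_tgt f)) (s_f f)))
   (push (s_phi f) (s_src f)) (push (s_psi g) (s_tgt g)) by homs.
have [e1 e2 e3 e4 e5] := mkSigE pf qg (proj1 hc) (proj2 hc).
rewrite /sig_comp; split => //.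
rewrite /Gm e1 e2 e3 e4 e5 -e.
rassoc.
rewrite (swp_comp_r pg (@jinj_R _) qf); last by cd.
done.
Qed.

End Sig2.


Lemma jinj_evn n (ps : nat -> inj) : jinj n ps -> jinj n (fun a => evn (ps a)).
Proof. by move=> h a b x y ha hb /= /double_inj; apply: h. Qed.
Lemma jinj_odn n (ps : nat -> inj) : jinj n ps -> jinj n (fun a => odn (ps a)).
Proof. by move=> h a b x y ha hb /= [] /double_inj; apply: h. Qed.

Lemma evod_neq (u v : inj) x y : evn u x = odn v y -> False.
Proof. move=> /= /(congr1 odd); by rewrite /= !odd_double. Qed.

Lemma jinj_evod n m (ps qs : nat -> inj) : jinj n ps -> jinj m qs ->
  jinj (n + m) (catf n (fun a => evn (ps a)) (fun a => odn (qs a))).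
Proof.
move=> h1 h2; apply: jinj_catI; [exact: jinj_evn | exact: jinj_odn |].
by move=> a b x y _ _ /evod_neq.
Qed.

Lemma catf_shift n a b : (fun i => catf n a b (i + n)) = b.
Proof.
apply: functional_extensionality => i; rewrite /catf addnK.
by have -> : (i + n < n) = false by lia.
Qed.

Lemma jinj_split_r n m P : jinj (n + m) P -> jinj m (fun i => P (i + n)).
Proof. move=> h a b x y ha hb /h; lia. Qed.

Lemma jinj_split_l n m P : jinj (n + m) P -> jinj n P.
Proof. move=> h; apply: jinj_le h; lia. Qed.

Section Sig3.
Variable C : PCat.
Let ax := pax C.

Lemma disj_evod (ps qs : nat -> inj) (Xs Ys : seq (pOb C)) : jinj (size Xs) ps -> jinj (size Ys) qs ->
  disj (push (fun a => evn (ps a)) Xs) (push (fun a => odn (qs a)) Ys).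
Proof.
move=> h1 h2.
apply: sin_disj (sin_push (jinj_evn h1)) (sin_push (jinj_odn h2)) _.
by move=> k [a [x [ha ->]]] [b [y [hb /evod_neq]]].
Qed.

Lemma disj_split P (Xs Ys : seq (pOb C)) : jinj (size Xs + size Ys) P ->
  disj (push P Xs) (push (fun i => P (i + size Xs)) Ys).
Proof.
move=> h; rewrite !pushE; apply: disj_pushl_cat.
by rewrite catf_split.
Qed.

Lemma swp_split P Q (Xs Ys : seq (pOb C)) :
  jinj (size Xs + size Ys) P -> jinj (size Xs + size Ys) Q ->
  swp P Q (Xs ++ Ys) = pplusm (swp P Q Xs) (swp (fun i => P (i + size Xs)) (fun i => Q (i + size Xs)) Ys).
Proof.
move=> hP hQ.
have := @swp_cat C P (fun i => P (i + size Xs)) Q (fun i => Q (i + size Xs)) Xs Ys.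
by rewrite !catf_split; apply.
Qed.

Lemma swp_catl n a b Q (Xs : seq (pOb C)) : size Xs = n -> swp (catf n a b) Q Xs = swp a Q Xs.
Proof. by move=> e; apply: swp_ext => i hi; rewrite /catf -e hi. Qed.
Lemma swp_catl' n a b Q (Xs : seq (pOb C)) : size Xs = n -> swp Q (catf n a b) Xs = swp Q a Xs.
Proof. by move=> e; apply: swp_ext => i hi; rewrite /catf -e hi. Qed.

Ltac swps := repeat first [ rewrite swp_comp_r; [|done|done|done|cd] | rewrite swp_comp; [|done|done|done] ].

Lemma Gm_id (Xs : seq (pOb C)) :
  [/\ s_src (sig_id Xs) = Xs, s_tgt (sig_id Xs) = Xs & Gm (sig_id Xs) = pid (Pl Xs)].
Proof.
have hc := @jinj_canon (size Xs).
have [e1 e2 e3 e4 e5] := mkSigE hc hc (ax_dom_id ax _) (ax_cod_id ax _).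
rewrite /sig_id; split => //.
have hR := @jinj_R (size Xs).
rewrite /Gm e1 e2 e3 e4 e5 (comp_idl (X := push (R (size Xs)) Xs)); last by homs.
by rewrite swp_comp // swp_id.
Qed.

Lemma Gm_tens (m1 m2 : SigMor C) :
  [/\ s_src (sig_tensm m1 m2) = s_src m1 ++ s_src m2,
      s_tgt (sig_tensm m1 m2) = s_tgt m1 ++ s_tgt m2 &
   Gm (sig_tensm m1 m2) = pplusm
     (pcomp (swp (R (size (s_tgt m1) + size (s_tgt m2))) (R (size (s_tgt m1))) (s_tgt m1))
        (pcomp (Gm m1) (swp (R (size (s_src m1))) (R (size (s_src m1) + size (s_src m2))) (s_src m1))))
     (pcomp (swp (fun a => R (size (s_tgt m1) + size (s_tgt m2)) (a + size (s_tgt m1))) (R (size (s_tgt m2))) (s_tgt m2))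
        (pcomp (Gm m2) (swp (R (size (s_src m2))) (fun a => R (size (s_src m1) + size (s_src m2)) (a + size (s_src m1))) (s_src m2))))].
Proof.
case: m1 => s1 t1 p1 q1 f1 hp1 hq1 d1 c1.
case: m2 => s2 t2 p2 q2 f2 hp2 hq2 d2 c2.
rewrite /sig_tensm /Gm /=.
set p1e := fun a => evn (p1 a); set q1e := fun a => evn (q1 a).
set p2o := fun a => odn (p2 a); set q2o := fun a => odn (q2 a).
have hp1e : jinj (size s1) p1e by apply: jinj_evn.
have hq1e : jinj (size t1) q1e by apply: jinj_evn.
have hp2o : jinj (size s2) p2o by apply: jinj_odn.
have hq2o : jinj (size t2) q2o by apply: jinj_odn.
have hf1 : hom f1 (push p1 s1) (push q1 t1) by [].
have hf2 : hom f2 (push p2 s2) (push q2 t2) by [].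
set f1' := pcomp (swp q1e q1 t1) (pcomp f1 (swp p1 p1e s1)).
set f2' := pcomp (swp q2o q2 t2) (pcomp f2 (swp p2 p2o s2)).
have hf1' : hom f1' (push p1e s1) (push q1e t1) by rewrite /f1'; homs.
have hf2' : hom f2' (push p2o s2) (push q2o t2) by rewrite /f2'; homs.
have dS : disj (push p1e s1) (push p2o s2) by apply: disj_evod.
have dT : disj (push q1e t1) (push q2o t2) by apply: disj_evod.
have hF := hom_plus hf1' hf2' dS dT.
have jp : jinj (size (s1 ++ s2)) (catf (size s1) p1e p2o) by rewrite size_cat; apply: jinj_evod.
have jq : jinj (size (t1 ++ t2)) (catf (size t1) q1e q2o) by rewrite size_cat; apply: jinj_evod.
have ed : pdom (pplusm f1' f2') = push (catf (size s1) p1e p2o) (s1 ++ s2).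
  by rewrite (homd hF) push_cat // -size_cat.
have ec : pcod (pplusm f1' f2') = push (catf (size t1) q1e q2o) (t1 ++ t2).
  by rewrite (homc hF) push_cat // -size_cat.
have [e1 e2 e3 e4 e5] := mkSigE jp jq ed ec.
rewrite e1 e2 e3 e4 e5; split => //.
rewrite !size_cat.
have hRS := @jinj_R (size s1 + size s2); have hRT := @jinj_R (size t1 + size t2).
rewrite size_cat in jp; rewrite size_cat in jq.
rewrite (swp_split jp hRS) (swp_split hRT jq) !catf_shift swp_catl // swp_catl' //.
have hRS1 := jinj_split_l hRS; have hRS2 := jinj_split_r hRS.
have hRT1 := jinj_split_l hRT; have hRT2 := jinj_split_r hRT.
have hR1 := @jinj_R (size s1); have hR2 := @jinj_R (size s2).
have hR3 := @jinj_R (size t1); have hR4 := @jinj_R (size t2).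
rewrite (plus_comp (X := push (R (size s1 + size s2)) s1) (X' := push (fun i => R (size s1 + size s2) (i + size s1)) s2)
  (Y := push p1e s1) (Y' := push p2o s2) (Z := push q1e t1) (Z' := push q2o t2)); try homs; try done.
  all: try exact: disj_split.
rewrite (plus_comp (X := push (R (size s1 + size s2)) s1) (X' := push (fun i => R (size s1 + size s2) (i + size s1)) s2)
  (Y := push q1e t1) (Y' := push q2o t2) (Z := push (R (size t1 + size t2)) t1) (Z' := push (fun i => R (size t1 + size t2) (i + size t1)) t2)); try homs; try done.
  all: try exact: disj_split.
rewrite /f1' /f2'.
congr pplusm; rassoc; swps; done.
Qed.

End Sig3.


Lemma injM1u (u : inj) : injM inj1 u = u. Proof. by apply: inj_ext. Qed.
Lemma injMu1 (u : inj) : injM u inj1 = u. Proof. by apply: inj_ext. Qed.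

Section Helpers.
Variable C : PCat.
Let ax := pax C.

Lemma act1 (X : pOb C) : pact inj1 X = X. Proof. exact: (ax_act_unit_ob ax). Qed.

Lemma push0 ps : push ps [::] = pzero C. Proof. by rewrite /push big_ord0. Qed.
Lemma push1 ps (X : pOb C) : push ps [:: X] = pact (ps 0) X.
Proof. by rewrite pushE /= (ax_unitr_ob ax). Qed.
Lemma push2 ps (X Y : pOb C) : push ps [:: X; Y] = pplus (pact (ps 0) X) (pact (ps 1) Y).
Proof. by rewrite pushE /= (ax_unitr_ob ax). Qed.
Lemma push3 ps (X Y Z : pOb C) :
  push ps [:: X; Y; Z] = pplus (pact (ps 0) X) (pplus (pact (ps 1) Y) (pact (ps 2) Z)).
Proof. by rewrite pushE /= (ax_unitr_ob ax). Qed.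
Lemma swp0 ps qs : swp ps qs [::] = pid (pzero C). Proof. by rewrite /swp big_ord0. Qed.
Lemma swp1 ps qs (X : pOb C) : swp ps qs [:: X] = pactm (ps 0) (qs 0) (pid X).
Proof. by rewrite swpE /= (ax_unitr_mor ax). Qed.
Lemma swp2 ps qs (X Y : pOb C) : swp ps qs [:: X; Y] =
  pplusm (pactm (ps 0) (qs 0) (pid X)) (pactm (ps 1) (qs 1) (pid Y)).
Proof. by rewrite swpE /= (ax_unitr_mor ax). Qed.
Lemma swp3 ps qs (X Y Z : pOb C) : swp ps qs [:: X; Y; Z] =
  pplusm (pactm (ps 0) (qs 0) (pid X)) (pplusm (pactm (ps 1) (qs 1) (pid Y)) (pactm (ps 2) (qs 2) (pid Z))).
Proof. by rewrite swpE /= (ax_unitr_mor ax). Qed.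
Lemma pushm2 ps (f g : pMor C) : pushm ps [:: f; g] =
  pplusm (pactm (ps 0) (ps 0) f) (pactm (ps 1) (ps 1) g).
Proof. by rewrite pushmE /= (ax_unitr_mor ax). Qed.

Lemma supp_plus (A B : pOb C) n : disj A B -> supp (pplus A B) n -> supp A n \/ supp B n.
Proof.
move=> d h; apply: NNPP => hn.
have [hA hB] : ~ supp A n /\ ~ supp B n by tauto.
have [SA hSA] := not_all_ex_not _ _ hA; have [hSA1 hSA2] := imply_to_and _ _ hSA.
have [SB hSB] := not_all_ex_not _ _ hB; have [hSB1 hSB2] := imply_to_and _ _ hSB.
have hs : supports (SA ++ SB) (pplus A B).
  move=> u hu; rewrite (ax_equiv_ob ax _ d) hSA1 ?hSB1 //.
    by move=> b hb; apply: hu; rewrite mem_cat hb orbT.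
  by move=> b hb; apply: hu; rewrite mem_cat hb.
have := h _ hs; rewrite mem_cat => /orP [] //.
Qed.

Lemma disj_plus_l (A B Z : pOb C) : disj A B -> disj A Z -> disj B Z -> disj (pplus A B) Z.
Proof. by move=> d1 d2 d3 n /(supp_plus d1) [] h hz; [apply: (d2 n) | apply: (d3 n)]. Qed.

Lemma disj_plus_r (A B Z : pOb C) : disj A B -> disj Z A -> disj Z B -> disj Z (pplus A B).
Proof. by move=> d1 d2 d3; apply: disj_sym; apply: disj_plus_l => //; apply: disj_sym. Qed.

Lemma disj_act (u v : inj) (X Y : pOb C) : (forall x y, u x = v y -> False) -> disj (pact u X) (pact v Y).
Proof.
move=> h; apply: (sin_disj (S := fun k => exists x, k = u x) (T := fun k => exists y, k = v y)).
- by apply: sin_act => x; exists x.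
- by apply: sin_act => x; exists x.
- by move=> k [x ->] [y /h].
Qed.

Lemma act_comp (w v u : inj) (f g : pMor C) : pcod f = pdom g ->
  pcomp (pactm w v g) (pactm v u f) = pactm w u (pcomp g f).
Proof. exact: (ax_act_comp ax). Qed.

Lemma act_unit_mor (f : pMor C) : pactm inj1 inj1 f = f. Proof. exact: (ax_act_unit_mor ax). Qed.

Lemma act_act (v v' u u' : inj) (f : pMor C) : pactm v u (pactm v' u' f) = pactm (injM v v') (injM u u') f.
Proof. by rewrite (ax_act_mul_mor ax). Qed.

End Helpers.

Section Funct.
Variables C D : PCat.
Variable F : PMor C D.

Lemma F_pushl ps (Xs : seq (pOb C)) : jinj (size Xs) ps ->
  Fo F (pushl ps Xs) = pushl ps (map (Fo F) Xs).
Proof.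
have fa := Fax F.
elim: Xs ps => [|X Xs IH] ps hj /=; first exact: fax_zero fa.
rewrite (fax_plus_ob fa); last exact: disj_head.
by rewrite (fax_act_ob fa) IH //; apply: jinj_shift.
Qed.

Lemma F_push ps (Xs : seq (pOb C)) : jinj (size Xs) ps ->
  Fo F (push ps Xs) = push ps (map (Fo F) Xs).
Proof. by rewrite !pushE; apply: F_pushl. Qed.
End Funct.


Definition I : nat -> inj := fun _ => inj1.

Section Constr.
Variable mu : 'I_2 * nat -> nat.
Hypothesis Hmu : injective mu.

Definition m1 := musec Hmu ord0.
Definition m2 := musec Hmu ord_max.
Definition MM := fam [:: m1; m2].

Lemma m12 x y : m1 x = m2 y -> False.
Proof. by move=> /Hmu []. Qed.

Lemma jinj_MM : jinj 2 MM.
Proof.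
move=> [|[|a]] [|[|b]] x y //= _ _ e; exfalso; [exact: m12 e | exact: m12 (esym e)].
Qed.

Variable C : PCat.
Let ax := pax C.

Definition tens (X Y : pOb C) := push MM [:: X; Y].

Definition PhiM (f : pMor C) : SigMor C := mkSig [:: pdom f] [:: pcod f] I I f.
Definition PhiMu (X Y : pOb C) : SigMor C :=
  mkSig [:: X; Y] [:: tens X Y] MM I (pid (tens X Y)).
Definition PhiEps : SigMor C := mkSig [::] [:: pzero C] I I (pid (pzero C)).

Lemma Pl1 (X : pOb C) : Pl [:: X] = X.
Proof. by rewrite /Pl push1 act1. Qed.

Lemma pushI1 (X : pOb C) : push I [:: X] = X.
Proof. by rewrite push1 act1. Qed.

Lemma swpI1 (X : pOb C) : swp I I [:: X] = pid X.
Proof. by rewrite swp1 act_unit_mor. Qed.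

Lemma PhiME (f : pMor C) :
  [/\ s_src (PhiM f) = [:: pdom f], s_tgt (PhiM f) = [:: pcod f] & Gm (PhiM f) = f].
Proof.
have [e1 e2 e3 e4 e5] := mkSigE (src := [:: pdom f]) (tgt := [:: pcod f]) (f := f) (@jinj_one I) (@jinj_one I) (esym (pushI1 _)) (esym (pushI1 _)).
rewrite /PhiM; split => //.
rewrite /Gm e1 e2 e3 e4 e5 /= -/I !swpI1.
by rewrite (comp_idr (X := pdom f) (Y := pcod f)) ?(comp_idl (X := pdom f)).
Qed.

Lemma tensE (X Y : pOb C) : tens X Y = pplus (pact m1 X) (pact m2 Y).
Proof. by rewrite /tens push2. Qed.

Lemma PhiMuE (X Y : pOb C) :
  [/\ s_src (PhiMu X Y) = [:: X; Y], s_tgt (PhiMu X Y) = [:: tens X Y] &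
      Gm (PhiMu X Y) = swp MM (R 2) [:: X; Y]].
Proof.
have [e1 e2 e3 e4 e5] := mkSigE (src := [:: X; Y]) (tgt := [:: tens X Y]) (f := pid (tens X Y)) jinj_MM (@jinj_one I) (ax_dom_id ax _)
   (etrans (ax_cod_id ax _) (esym (pushI1 _))).
rewrite /PhiMu; split => //.
rewrite /Gm e1 e2 e3 e4 e5.
change (R (size [:: tens X Y])) with I; rewrite swpI1.
have h2 := @jinj_R (size [:: X; Y]).
have hM : jinj (size [:: X; Y]) MM by exact: jinj_MM.
rewrite (comp_idl (X := push (R 2) [:: X; Y])); last by homs.
by rewrite (comp_idl (X := push (R 2) [:: X; Y])); last by homs.
Qed.

Lemma PhiEpsE :
  [/\ s_src PhiEps = [::], s_tgt PhiEps = [:: pzero C] & Gm PhiEps = pid (pzero C)].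
Proof.
have [e1 e2 e3 e4 e5] := mkSigE (src := [::]) (tgt := [:: pzero C]) (f := pid (pzero C)) (@jinj_zero I) (@jinj_one I) (etrans (ax_dom_id ax _) (esym (push0 C I)))
   (etrans (ax_cod_id ax _) (esym (pushI1 _))).
rewrite /PhiEps; split => //.
rewrite /Gm e1 e2 e3 e4 e5 /= -/I !swpI1 swp0.
by rewrite !(comp_idl (hom_pid _)).
Qed.

End Constr.


Section Main.
Variable mu : 'I_2 * nat -> nat.
Hypothesis Hmu : injective mu.

Definition PhiF (C : PCat) : SMFun (mu_star Hmu C) (Sigma C) :=
  {| fo := (fun X : pOb C => [:: X]) : smOb (mu_star Hmu C) -> smOb (Sigma C);
     fm := (@PhiM C) : smMor (mu_star Hmu C) -> smMor (Sigma C);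
     fmu := (@PhiMu mu Hmu C) : smOb (mu_star Hmu C) -> smOb (mu_star Hmu C) -> smMor (Sigma C);
     feps := (PhiEps C) : smMor (Sigma C) |}.

Section OneC.
Variable C : PCat.
Let ax := pax C.

Lemma phi_functor : is_functor (A := mu_star Hmu C) (B := Sigma C) (fo (PhiF C)) (fm (PhiF C)).
Proof.
split.
- by move=> f /=; have [-> -> _] := PhiME f.
- by move=> f g /= ->; apply: rst_refl.
- move=> X /=; have [a b c] := PhiME (pid X); have [a' b' c'] := Gm_id [:: X].
  apply: Gm_heq; rewrite ?a ?b ?c ?a' ?b' ?c' ?(ax_dom_id ax) ?(ax_cod_id ax) ?Pl1 //.
- move=> f g /= e.
  have [a b c] := PhiME f; have [a1 b1 c1] := PhiME g.
  have e' : s_tgt (PhiM f) = s_src (PhiM g) by rewrite b a1 e.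
  have [a2 b2 c2] := Gm_comp e'.
  have [a3 b3 c3] := PhiME (pcomp g f).
  apply: Gm_heq; rewrite ?a2 ?b2 ?c2 ?a3 ?b3 ?c3 ?a ?b ?c ?a1 ?b1 ?c1.
  + by rewrite (ax_dom_comp ax).
  + by rewrite (ax_cod_comp ax).
  + done.
Qed.

Definition epsS (Ys : seq (pOb C)) : SigMor C := mkSig [:: Pl Ys] Ys I (R (size Ys)) (pid (Pl Ys)).
Definition epsI (Ys : seq (pOb C)) : SigMor C := mkSig Ys [:: Pl Ys] (R (size Ys)) I (pid (Pl Ys)).

Lemma epsSE Ys : [/\ s_src (epsS Ys) = [:: Pl Ys], s_tgt (epsS Ys) = Ys & Gm (epsS Ys) = pid (Pl Ys)].
Proof.
have hR := @jinj_R (size Ys).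
have [e1 e2 e3 e4 e5] := mkSigE (src := [:: Pl Ys]) (tgt := Ys) (f := pid (Pl Ys)) (@jinj_one I) hR
   (etrans (ax_dom_id ax _) (esym (pushI1 _))) (ax_cod_id ax _).
rewrite /epsS; split => //.
rewrite /Gm e1 e2 e3 e4 e5.
change (R (size [:: Pl Ys])) with I; rewrite swpI1 swp_id //.
by rewrite (comp_idl (hom_pid (Pl Ys))) (comp_idl (hom_pid (Pl Ys))).
Qed.

Lemma epsIE Ys : [/\ s_src (epsI Ys) = Ys, s_tgt (epsI Ys) = [:: Pl Ys] & Gm (epsI Ys) = pid (Pl Ys)].
Proof.
have hR := @jinj_R (size Ys).
have [e1 e2 e3 e4 e5] := mkSigE (src := Ys) (tgt := [:: Pl Ys]) (f := pid (Pl Ys)) hR (@jinj_one I)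
   (ax_dom_id ax _) (etrans (ax_cod_id ax _) (esym (pushI1 _))).
rewrite /epsI; split => //.
rewrite /Gm e1 e2 e3 e4 e5.
change (R (size [:: Pl Ys])) with I; rewrite swpI1 swp_id //.
by rewrite (comp_idl (hom_pid (Pl Ys))) (comp_idl (hom_pid (Pl Ys))).
Qed.

Lemma phi_equiv : cat_equivalence (PhiF C).
Proof.
exists (@Pl C : smOb (Sigma C) -> smOb (mu_star Hmu C)).
exists (@Gm C : smMor (Sigma C) -> smMor (mu_star Hmu C)).
exists (fun X : pOb C => pid X : smMor (mu_star Hmu C)).
exists (epsS : smOb (Sigma C) -> smMor (Sigma C)).
split.
- split.
  + move=> m /=; exact: hom_Gm.
  + move=> m m' /= h; exact: heq_Gm.
  + by move=> Xs /=; have [_ _ ->] := Gm_id Xs.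
  + move=> m m' /= e; by have [_ _ ->] := Gm_comp e.
- split.
  + move=> X /=; split.
      by split; rewrite /= ?(ax_dom_id ax) ?(ax_cod_id ax) ?Pl1.
    exists (pid X); split.
      by split; rewrite /= ?(ax_dom_id ax) ?(ax_cod_id ax).
    by split; rewrite /= ?(ax_dom_id ax) ?(ax_cod_id ax) (comp_idl (hom_pid X)).
  + move=> f /=; have [_ _ ->] := PhiME f.
    by rewrite (comp_idr (X := pdom f) (Y := pcod f)) // (comp_idl (X := pdom f)).
- split.
  + move=> Ys /=; have [a b c] := epsSE Ys; split; first by split.
    exists (epsI Ys); have [a' b' c'] := epsIE Ys.
    split; first by split; rewrite /= ?a ?b ?a' ?b'.
    rewrite /= a b.
    have e1 : s_tgt (epsS Ys) = s_src (epsI Ys) by rewrite b a'.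
    have e2 : s_tgt (epsI Ys) = s_src (epsS Ys) by rewrite b' a.
    have [f1 f2 f3] := Gm_comp e1; have [g1 g2 g3] := Gm_comp e2.
    have [h1 h2 h3] := Gm_id [:: Pl Ys]; have [k1 k2 k3] := Gm_id Ys.
    split; apply: Gm_heq; rewrite ?f1 ?f2 ?f3 ?g1 ?g2 ?g3 ?h1 ?h2 ?h3 ?k1 ?k2 ?k3 ?a ?b ?c ?a' ?b' ?c' //.
    * by rewrite Pl1 (comp_idl (hom_pid _)).
    * by rewrite (comp_idl (hom_pid _)).
  + move=> m /=.
    have [a b c] := epsSE (s_src m); have [a' b' c'] := epsSE (s_tgt m).
    have [p1 p2 p3] := PhiME (Gm m).
    have e1 : s_tgt (epsS (s_src m)) = s_src m by rewrite b.
    have e2 : s_tgt (PhiM (Gm m)) = s_src (epsS (s_tgt m)) by rewrite p2 a' (homc (hom_Gm m)).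
    have [f1 f2 f3] := Gm_comp (g := m) e1; have [g1 g2 g3] := Gm_comp e2.
    apply: Gm_heq; rewrite ?f1 ?f2 ?f3 ?g1 ?g2 ?g3 ?a ?b ?c ?a' ?b' ?c' ?p1 ?p2 ?p3 ?(homd (hom_Gm m)) //.
    by rewrite (comp_idr (hom_Gm m)) (comp_idl (hom_Gm m)).
Qed.

Lemma phi_mu_iso (X Y : pOb C) : isiso (S := Sigma C) (PhiMu Hmu X Y).
Proof.
pose T := tens Hmu X Y.
pose g := mkSig [:: T] [:: X; Y] I (MM Hmu) (pid T).
have hM := @jinj_MM _ Hmu; have hR := @jinj_R 2.
have [e1 e2 e3 e4 e5] := mkSigE (src := [:: T]) (tgt := [:: X; Y]) (f := pid T) (@jinj_one I) hM
   (etrans (ax_dom_id ax _) (esym (pushI1 _))) (ax_cod_id ax _).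
have Gg : Gm g = swp (R 2) (MM Hmu) [:: X; Y].
  rewrite /Gm e1 e2 e3 e4 e5; change (R (size [:: T])) with I; rewrite swpI1.
  rewrite (comp_idl (hom_pid T)) (comp_idr (X := T) (Y := push (R 2) [:: X; Y])) //.
  by homs.
have [a b c] := PhiMuE Hmu X Y.
exists g; split; first by split; rewrite /= ?a ?b.
rewrite /= a b.
have E1 : s_tgt (PhiMu Hmu X Y) = s_src g by rewrite b e1.
have E2 : s_tgt g = s_src (PhiMu Hmu X Y) by rewrite a e2.
have [f1 f2 f3] := Gm_comp E1; have [g1 g2 g3] := Gm_comp E2.
have [h1 h2 h3] := Gm_id [:: X; Y]; have [k1 k2 k3] := Gm_id [:: T].
split; apply: Gm_heq; rewrite ?f1 ?f2 ?f3 ?g1 ?g2 ?g3 ?h1 ?h2 ?h3 ?k1 ?k2 ?k3 ?a ?b ?c ?e1 ?e2 ?Gg //.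
- by rewrite swp_comp // swp_id.
- by rewrite swp_comp // swp_id // Pl1.
Qed.

Lemma phi_eps_iso : isiso (S := Sigma C) (PhiEps C).
Proof.
pose g := mkSig [:: pzero C] [::] I I (pid (pzero C)).
have [e1 e2 e3 e4 e5] := mkSigE (src := [:: pzero C]) (tgt := [::]) (f := pid (pzero C)) (@jinj_one I) (@jinj_zero I)
   (etrans (ax_dom_id ax _) (esym (pushI1 _))) (etrans (ax_cod_id ax _) (esym (push0 C I))).
have Gg : Gm g = pid (pzero C).
  rewrite /Gm e1 e2 e3 e4 e5; change (R (size [:: pzero C])) with I; rewrite swpI1 swp0.
  by rewrite !(comp_idl (hom_pid (pzero C))).
have [a b c] := PhiEpsE C.
exists g; split; first by split; rewrite /= ?a ?b.
rewrite /= a b.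
have E1 : s_tgt (PhiEps C) = s_src g by rewrite b e1.
have E2 : s_tgt g = s_src (PhiEps C) by rewrite a e2.
have [f1 f2 f3] := Gm_comp E1; have [g1 g2 g3] := Gm_comp E2.
have [h1 h2 h3] := Gm_id (C := C) [::]; have [k1 k2 k3] := Gm_id [:: pzero C].
split; apply: Gm_heq; rewrite ?f1 ?f2 ?f3 ?g1 ?g2 ?g3 ?h1 ?h2 ?h3 ?k1 ?k2 ?k3 ?a ?b ?c ?e1 ?e2 ?Gg //.
- by rewrite /Pl push0 (comp_idl (hom_pid (pzero C))).
- by rewrite Pl1 (comp_idl (hom_pid (pzero C))).
Qed.

End OneC.

Lemma PhiM_fields (C : PCat) (f : pMor C) :
  [/\ s_src (PhiM f) = [:: pdom f], s_tgt (PhiM f) = [:: pcod f], s_phi (PhiM f) = I,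
      s_psi (PhiM f) = I & s_f (PhiM f) = f].
Proof.
have H := mkSigE (src := [:: pdom f]) (tgt := [:: pcod f]) (f := f) (@jinj_one I) (@jinj_one I) (esym (pushI1 _)) (esym (pushI1 _)).
exact: H.
Qed.

Lemma PhiMu_fields (C : PCat) (X Y : pOb C) :
  [/\ s_src (PhiMu Hmu X Y) = [:: X; Y], s_tgt (PhiMu Hmu X Y) = [:: tens Hmu X Y], s_phi (PhiMu Hmu X Y) = MM Hmu,
      s_psi (PhiMu Hmu X Y) = I & s_f (PhiMu Hmu X Y) = pid (tens Hmu X Y)].
Proof.
have H := mkSigE (src := [:: X; Y]) (tgt := [:: tens Hmu X Y]) (f := pid (tens Hmu X Y)) (@jinj_MM _ Hmu) (@jinj_one I)
  (ax_dom_id (pax C) _) (etrans (ax_cod_id (pax C) _) (esym (pushI1 _))).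
exact: H.
Qed.

Lemma PhiEps_fields (C : PCat) :
  [/\ s_src (PhiEps C) = [::], s_tgt (PhiEps C) = [:: pzero C], s_phi (PhiEps C) = I,
      s_psi (PhiEps C) = I & s_f (PhiEps C) = pid (pzero C)].
Proof.
have H := mkSigE (src := [::]) (tgt := [:: pzero C]) (f := pid (pzero C)) (@jinj_zero I) (@jinj_one I)
  (etrans (ax_dom_id (pax C) _) (esym (push0 C I))) (etrans (ax_cod_id (pax C) _) (esym (pushI1 _))).
exact: H.
Qed.

Lemma phi_nat (C D : PCat) (F : PMor C D) :
  smf_eq (smf_comp (Sigma_fun F) (PhiF C)) (smf_comp (PhiF D) (mu_star_fun Hmu F)).
Proof.
have fa := Fax F.
split.
- by [].
- move=> f /=; have [a b c d e] := PhiM_fields f.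
  rewrite /SigmaF a b c d e /PhiM (fax_dom fa) (fax_cod fa); exact: rst_refl.
- move=> X Y /=.
  have [a b c d e] := PhiMu_fields X Y.
  have hT : Fo F (tens Hmu X Y) = tens Hmu (Fo F X) (Fo F Y).
    by rewrite /tens F_push //; exact: jinj_MM.
  have -> : SigmaF F (PhiMu Hmu X Y) = PhiMu Hmu (Fo F X) (Fo F Y).
    by rewrite /SigmaF a b c d e /= (fax_id fa) hT.
  have [a1 b1 c1] := PhiMuE Hmu (Fo F X) (Fo F Y).
  have [a2 b2 c2] := Gm_id [:: Fo F X; Fo F Y].
  have [a3 b3 c3] := PhiME (pid (tens Hmu (Fo F X) (Fo F Y))).
  have e1 : s_tgt (sig_id [:: Fo F X; Fo F Y]) = s_src (PhiMu Hmu (Fo F X) (Fo F Y)) by rewrite b2 a1.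
  have e2 : s_tgt (PhiMu Hmu (Fo F X) (Fo F Y)) = s_src (PhiM (pid (tens Hmu (Fo F X) (Fo F Y)))).
    by rewrite b1 a3 (ax_dom_id (pax D)).
  have [f1 f2 f3] := Gm_comp e1; have [g1 g2 g3] := Gm_comp e2.
  have hM := @jinj_MM _ Hmu; have hR := @jinj_R 2.
  apply: Gm_heq; rewrite ?f1 ?f2 ?f3 ?g1 ?g2 ?g3 ?a1 ?b1 ?c1 ?a2 ?b2 ?c2 ?a3 ?b3 ?c3 ?(ax_cod_id (pax D)) //.
  rewrite (comp_idr (X := push (R 2) [:: Fo F X; Fo F Y]) (Y := tens Hmu (Fo F X) (Fo F Y))); last by homs.
  by rewrite (comp_idl (X := push (R 2) [:: Fo F X; Fo F Y])); last by homs.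
- rewrite /=.
  have [a b c d e] := PhiEps_fields C.
  have -> : SigmaF F (PhiEps C) = PhiEps D.
    by rewrite /SigmaF a b c d e /= (fax_id fa) (fax_zero fa).
  have [a1 b1 c1] := PhiEpsE D.
  have [a2 b2 c2] := Gm_id (C := D) [::].
  have [a3 b3 c3] := PhiME (pid (pzero D)).
  have e1 : s_tgt (sig_id (C := D) [::]) = s_src (PhiEps D) by rewrite b2 a1.
  have e2 : s_tgt (PhiEps D) = s_src (PhiM (pid (pzero D))) by rewrite b1 a3 (ax_dom_id (pax D)).
  have [f1 f2 f3] := Gm_comp e1; have [g1 g2 g3] := Gm_comp e2.
  apply: Gm_heq; rewrite ?f1 ?f2 ?f3 ?g1 ?g2 ?g3 ?a1 ?b1 ?c1 ?a2 ?b2 ?c2 ?a3 ?b3 ?c3 ?(ax_cod_id (pax D)) //.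
  by rewrite /Pl push0 !(comp_idl (hom_pid (pzero D))).
Qed.

End Main.


Lemma canon_neq n a b x y : a < n -> b < n -> a <> b -> canon n a x = canon n b y -> False.
Proof. by move=> ha hb hab e; apply: hab; apply: (jinj_canon ha hb e). Qed.

Section T.
Variable mu : 'I_2 * nat -> nat.
Hypothesis Hmu : injective mu.
Variable C : PCat.
Let ax := pax C.
Notation m1 := (m1 Hmu). Notation m2 := (m2 Hmu).

Lemma jinj_M21 : jinj 2 (fam [:: m2; m1]).
Proof.
move=> [|[|a]] [|[|b]] x y //= _ _ e; exfalso; [exact: m12 (esym e) | exact: m12 e].
Qed.

Lemma Gm_beta1 (X Y : pOb C) :
  [/\ s_src (sig_beta [:: X] [:: Y]) = [:: X; Y], s_tgt (sig_beta [:: X] [:: Y]) = [:: Y; X] &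
      Gm (sig_beta [:: X] [:: Y]) = pplusm (pactm (canon 2 0) (canon 2 1) (pid Y)) (pactm (canon 2 1) (canon 2 0) (pid X))].
Proof.
rewrite /sig_beta /=.
set pb := fun a => if a < 1 then canon 2 (a + 1) else canon 2 (a - 1).
have hc := @jinj_canon 2.
have hpb : jinj 2 pb.
  move=> [|[|a]] [|[|b]] x y //= _ _ e; exfalso.
  - by apply: (canon_neq (n := 2) (a := 1) (b := 0)) e.
  - by apply: (canon_neq (n := 2) (a := 0) (b := 1)) e.
have dXY : disj (pact (canon 2 0) X) (pact (canon 2 1) Y).
  by apply: disj_act => x y; apply: canon_neq.
have ec : pcod (pid (push (canon 2) [:: X; Y])) = push pb [:: Y; X].
  by rewrite (ax_cod_id ax) !push2 /= (ax_comm_ob ax).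
have [e1 e2 e3 e4 e5] := mkSigE (src := [:: X; Y]) (tgt := [:: Y; X]) hc hpb (ax_dom_id ax _) ec.
split => //.
rewrite /Gm e1 e2 e3 e4 e5 /=.
change (R 2) with (canon 2).
rewrite swp_id // (comp_idl (hom_pid _)).
rewrite (comp_idr (X := push (canon 2) [:: X; Y]) (Y := push (canon 2) [:: Y; X])).
  by rewrite swp2.
have [d c] := swp_hom (Xs := [:: Y; X]) hc hpb.
by split; rewrite ?d ?c // -ec (ax_cod_id ax).
Qed.
End T.

Section T2.
Variable mu : 'I_2 * nat -> nat.
Hypothesis Hmu : injective mu.
Variable C : PCat.
Let ax := pax C.
Notation m1 := (m1 Hmu). Notation m2 := (m2 Hmu).

Ltac dj := solve [apply: disj_act => x y;
   first [ by apply: canon_neq | by move/m12 | by move/esym/m12 ]].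

Lemma phi_sym' (X Y : smOb (mu_star Hmu C)) :
  smheq (s := Sigma C) (smcomp (fm (PhiF Hmu C) (smbeta (s := mu_star Hmu C) X Y)) (fmu (PhiF Hmu C) X Y))
           (smcomp (fmu (PhiF Hmu C) Y X) (smbeta (fo (PhiF Hmu C) X) (fo (PhiF Hmu C) Y))).
Proof.
rewrite /=.
set b := swp _ _ _.
have j21 : jinj (size [:: X; Y]) (fam [:: m2; m1]) by exact: jinj_M21.
have j12 : jinj (size [:: X; Y]) (MM Hmu) by exact: jinj_MM.
have hR := @jinj_R (size [:: X; Y]).
have hb : hom b (tens Hmu X Y) (push (fam [:: m2; m1]) [:: X; Y]) by exact: hom_swp.
have [a1 b1 c1] := PhiMuE Hmu X Y.
have [a2 b2 c2] := PhiME b.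
have E1 : s_tgt (PhiMu Hmu X Y) = s_src (PhiM b) by rewrite b1 a2 (homd hb).
have [f1 f2 f3] := Gm_comp E1.
have [a3 b3 c3] := PhiMuE Hmu Y X.
have [a4 b4 c4] := Gm_beta1 X Y.
have E2 : s_tgt (sig_beta [:: X] [:: Y]) = s_src (PhiMu Hmu Y X) by rewrite b4 a3.
have [g1 g2 g3] := Gm_comp E2.
apply: Gm_heq; rewrite ?f1 ?f2 ?f3 ?g1 ?g2 ?g3 ?a1 ?b1 ?c1 ?a2 ?b2 ?c2 ?a3 ?b3 ?c3 ?a4 ?b4 ?c4 //.
  by rewrite (homc hb) push2 tensE /= (ax_comm_ob ax) //; dj.
rewrite /b swp_comp // !swp2 /R /MM /=.
rewrite (plus_comp (X := pact (canon 2 1) Y) (X' := pact (canon 2 0) X) (Y := pact (canon 2 0) Y)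
   (Y' := pact (canon 2 1) X) (Z := pact m1 Y) (Z' := pact m2 X)); try homs; try dj.
rewrite !act_comp ?(ax_cod_id ax) ?(ax_dom_id ax) //.
rewrite !(comp_idl (hom_pid _)).
rewrite (ax_comm_mor ax) //; split; rewrite ?(ax_act_dom ax) ?(ax_act_cod ax) ?(ax_dom_id ax) ?(ax_cod_id ax); dj.
Qed.
End T2.

Section T3.
Variable mu : 'I_2 * nat -> nat.
Hypothesis Hmu : injective mu.
Variable C : PCat.
Let ax := pax C.
Notation m1 := (m1 Hmu). Notation m2 := (m2 Hmu).

Ltac dj := solve [apply: disj_act => x y;
   first [ by apply: canon_neq | by move/m12 | by move/esym/m12 ]].

Lemma comp_act1 (f : pMor C) X (u : inj) : pdom f = X ->
  pcomp f (pactm inj1 u (pid X)) = pactm inj1 u f.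
Proof.
move=> hd; rewrite -{1}(act_unit_mor f) act_comp; last by rewrite (ax_cod_id ax).
by rewrite -hd (ax_idr ax).
Qed.

Lemma phi_mu_nat' (f g : smMor (mu_star Hmu C)) :
  smheq (s := Sigma C) (smcomp (fm (PhiF Hmu C) (smtensm (s := mu_star Hmu C) f g)) (fmu (PhiF Hmu C) (smdom f) (smdom g)))
        (smcomp (fmu (PhiF Hmu C) (smcod f) (smcod g)) (smtensm (fm (PhiF Hmu C) f) (fm (PhiF Hmu C) g))).
Proof.
rewrite /=.
set fg := pushm _ _.
have hf : hom f (pdom f) (pcod f) by [].
have hg : hom g (pdom g) (pcod g) by [].
have hfg : hom fg (tens Hmu (pdom f) (pdom g)) (tens Hmu (pcod f) (pcod g)).
  rewrite /fg pushm2 !tensE /=; apply: hom_plus; try homs; dj.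
have [a1 b1 c1] := PhiMuE Hmu (pdom f) (pdom g).
have [a2 b2 c2] := PhiME fg.
have E1 : s_tgt (PhiMu Hmu (pdom f) (pdom g)) = s_src (PhiM fg) by rewrite b1 a2 (homd hfg).
have [f1 f2 f3] := Gm_comp E1.
have [a3 b3 c3] := PhiMuE Hmu (pcod f) (pcod g).
have [a4 b4 c4] := Gm_tens (PhiM f) (PhiM g).
have [a5 b5 c5] := PhiME f; have [a6 b6 c6] := PhiME g.
have E2 : s_tgt (sig_tensm (PhiM f) (PhiM g)) = s_src (PhiMu Hmu (pcod f) (pcod g)) by rewrite b4 a3 b5 b6.
have [g1 g2 g3] := Gm_comp E2.
apply: Gm_heq; rewrite ?f1 ?f2 ?f3 ?g1 ?g2 ?g3 ?a1 ?b1 ?c1 ?a2 ?b2 ?c2 ?a3 ?b3 ?c3 ?a4 ?b4 ?c4 ?a5 ?b5 ?c5 ?a6 ?b6 ?c6 //.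
  by rewrite (homc hfg).
rewrite /fg pushm2 !swp2 !swp1 /R /MM /=.
rewrite -[1 + 1]/2 -[0 + 1]/1.
change (musec Hmu ord0) with m1; change (musec Hmu ord_max) with m2.
rewrite (plus_comp (X := pact (canon 2 0) (pdom f)) (X' := pact (canon 2 1) (pdom g)) (Y := pact m1 (pdom f))
   (Y' := pact m2 (pdom g)) (Z := pact m1 (pcod f)) (Z' := pact m2 (pcod g))); try homs; try dj.
rewrite (plus_comp (X := pact (canon 2 0) (pdom f)) (X' := pact (canon 2 1) (pdom g)) (Y := pact (canon 2 0) (pcod f))
   (Y' := pact (canon 2 1) (pcod g)) (Z := pact m1 (pcod f)) (Z' := pact m2 (pcod g))); try homs; try dj.
rewrite !comp_act1 // !act_comp ?(ax_act_cod ax) ?(ax_cod_id ax) ?(ax_dom_id ax) ?(ax_act_dom ax) //.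
- by rewrite !(comp_idl hf) !(comp_idl hg) (comp_idr hf) (comp_idr hg).
- by rewrite (comp_idl hg).
- by rewrite (comp_idl hf).
- by rewrite comp_act1 //; homs.
- by rewrite comp_act1 //; homs.
Qed.
End T3.

Section T4.
Variable mu : 'I_2 * nat -> nat.
Hypothesis Hmu : injective mu.
Variable C : PCat.
Let ax := pax C.
Notation m1 := (m1 Hmu). Notation m2 := (m2 Hmu).

Lemma act_pid0 (v u : inj) : pactm v u (pid (pzero C)) = pid (pzero C).
Proof.
set O := pzero C.
have d00 : disj O O by apply: disj_zero.
have hom0 : forall v u, hom (pactm v u (pid O)) O O.
  by move=> v' u'; split; rewrite ?(ax_act_dom ax) ?(ax_act_cod ax) ?(ax_dom_id ax) ?(ax_cod_id ax) act_zero.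
set h := pactm v u (pid O); set h' := pactm u v (pid O).
have hh : pplusm h h = h.
  by rewrite /h -(ax_equiv_mor ax) ?(ax_unitl_mor ax) //; split; rewrite ?(ax_dom_id ax) ?(ax_cod_id ax).
have hh' : pcomp h h' = pid O.
  rewrite /h /h' act_comp ?(ax_cod_id ax) ?(ax_dom_id ax) //.
  by rewrite (comp_idl (hom_pid O)) (ax_act_id ax) act_zero.
have key : pcomp (pplusm h h) (pplusm (pid O) h') = pplusm (pcomp h (pid O)) (pcomp h h').
  apply: (plus_comp (X := O) (X' := O) (Y := O) (Y' := O) (Z := O) (Z' := O));
  first [exact: hom_pid | exact: hom0 | exact: d00].
rewrite hh (ax_unitl_mor ax) hh' (comp_idr (hom0 v u)) (ax_unitr_mor ax) in key.
exact: esym key.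
Qed.

Lemma comp_pid_act (v : inj) (f : pMor C) X : pdom f = X -> pcomp (pactm v inj1 f) (pid X) = pactm v inj1 f.
Proof. by move=> hd; have := ax_idr ax (pactm v inj1 f); rewrite (ax_act_dom ax) act1 hd. Qed.

Lemma phi_unitl' (X : smOb (mu_star Hmu C)) :
  smheq (s := Sigma C) (smlam (fo (PhiF Hmu C) X))
    (smcomp (fm (PhiF Hmu C) (smlam (s := mu_star Hmu C) X))
       (smcomp (fmu (PhiF Hmu C) (smunit (mu_star Hmu C)) X) (smtensm (feps (PhiF Hmu C)) (smid (fo (PhiF Hmu C) X))))).
Proof.
rewrite /=.
change (musec Hmu ord_max) with m2.
set O := pzero C.
set l := pactm inj1 m2 (pid X).
have hl : hom l (pact m2 X) X by rewrite -{2}(act1 X); homs.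
have [a1 b1 c1] := Gm_tens (PhiEps C) (sig_id [:: X]).
have [a2 b2 c2] := PhiEpsE C; have [a3 b3 c3] := Gm_id [:: X].
have [a4 b4 c4] := PhiMuE Hmu O X.
have [a5 b5 c5] := PhiME l.
have eT : tens Hmu O X = pact m2 X by rewrite tensE act_zero (ax_unitl_ob ax).
have E1 : s_tgt (sig_tensm (PhiEps C) (sig_id [:: X])) = s_src (PhiMu Hmu O X) by rewrite b1 b2 b3 a4.
have [f1 f2 f3] := Gm_comp E1.
have E2 : s_tgt (sig_comp (PhiMu Hmu O X) (sig_tensm (PhiEps C) (sig_id [:: X]))) = s_src (PhiM l).
  by rewrite f2 b4 a5 (homd hl) eT.
have [g1 g2 g3] := Gm_comp E2.
apply: Gm_heq; rewrite ?g1 ?g2 ?g3 ?f1 ?f2 ?f3 ?a1 ?b1 ?c1 ?a2 ?b2 ?c2 ?a3 ?b3 ?c3 ?a4 ?b4 ?c4 ?a5 ?b5 ?c5 //.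
  by rewrite (homc hl).
rewrite !swp2 !swp1 swp0 /R /MM /= !act_pid0 !(ax_unitl_mor ax) act_unit_mor Pl1.
rewrite -[0 + 1]/1 -[1 + 1]/2.
rewrite !(comp_idl (hom_pid (pzero C))) (ax_unitl_mor ax) (comp_idl (hom_pid X)) comp_pid_act ?(ax_dom_id ax) //.
rewrite act_comp ?(ax_cod_id ax) ?(ax_dom_id ax) // (comp_idl (hom_pid X)).
rewrite /l act_comp ?(ax_cod_id ax) ?(ax_dom_id ax) // (comp_idl (hom_pid X)).
by rewrite act_unit_mor.
Qed.
Lemma phi_unitr' (X : smOb (mu_star Hmu C)) :
  smheq (s := Sigma C) (smrho (fo (PhiF Hmu C) X))
    (smcomp (fm (PhiF Hmu C) (smrho (s := mu_star Hmu C) X))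
       (smcomp (fmu (PhiF Hmu C) X (smunit (mu_star Hmu C))) (smtensm (smid (fo (PhiF Hmu C) X)) (feps (PhiF Hmu C))))).
Proof.
rewrite /=.
change (musec Hmu ord0) with m1.
set O := pzero C.
set l := pactm inj1 m1 (pid X).
have hl : hom l (pact m1 X) X by rewrite -{2}(act1 X); homs.
have [a1 b1 c1] := Gm_tens (sig_id [:: X]) (PhiEps C).
have [a2 b2 c2] := PhiEpsE C; have [a3 b3 c3] := Gm_id [:: X].
have [a4 b4 c4] := PhiMuE Hmu X O.
have [a5 b5 c5] := PhiME l.
have eT : tens Hmu X O = pact m1 X by rewrite tensE act_zero (ax_unitr_ob ax).
have E1 : s_tgt (sig_tensm (sig_id [:: X]) (PhiEps C)) = s_src (PhiMu Hmu X O) by rewrite b1 b2 b3 a4.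
have [f1 f2 f3] := Gm_comp E1.
have E2 : s_tgt (sig_comp (PhiMu Hmu X O) (sig_tensm (sig_id [:: X]) (PhiEps C))) = s_src (PhiM l).
  by rewrite f2 b4 a5 (homd hl) eT.
have [g1 g2 g3] := Gm_comp E2.
apply: Gm_heq; rewrite ?g1 ?g2 ?g3 ?f1 ?f2 ?f3 ?a1 ?b1 ?c1 ?a2 ?b2 ?c2 ?a3 ?b3 ?c3 ?a4 ?b4 ?c4 ?a5 ?b5 ?c5 //.
  by rewrite (homc hl).
rewrite !swp2 !swp1 swp0 /R /MM /=.
rewrite !act_pid0 !(comp_idl (hom_pid (pzero C))) !(ax_unitr_mor ax) act_unit_mor Pl1.
rewrite (comp_idl (hom_pid X)) comp_pid_act ?(ax_dom_id ax) //.
rewrite act_comp ?(ax_cod_id ax) ?(ax_dom_id ax) // (comp_idl (hom_pid X)).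
rewrite /l act_comp ?(ax_cod_id ax) ?(ax_dom_id ax) // (comp_idl (hom_pid X)).
by rewrite act_unit_mor.
Qed.
End T4.

Section T5.
Variable mu : 'I_2 * nat -> nat.
Hypothesis Hmu : injective mu.
Variable C : PCat.
Let ax := pax C.
Notation m1 := (m1 Hmu). Notation m2 := (m2 Hmu).

Lemma m12c (u : inj) x y : u (m1 x) = u (m2 y) -> False.
Proof. by move/injfP/m12. Qed.

Ltac jj := let e := fresh "e" in intro e; exfalso;
   first [ exact (@m12 _ Hmu _ _ e) | exact (@m12 _ Hmu _ _ (esym e)) | exact (@m12c m1 _ _ e) | exact (@m12c m1 _ _ (esym e)) | exact (@m12c m2 _ _ e) | exact (@m12c m2 _ _ (esym e))
         | (apply: (canon_neq _ _ _ e); done) ].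
Ltac dj := solve [apply: disj_act => x y /=; jj].
Ltac djs := solve [repeat first [apply: disj_plus_l | apply: disj_plus_r | dj]].
Lemma hom_act1r (v : inj) (f : pMor C) X Y : hom f X Y -> hom (pactm v inj1 f) X (pact v Y).
Proof. by move=> h; have := hom_act v inj1 h; rewrite act1. Qed.
Lemma hom_act1l (u : inj) (f : pMor C) X Y : hom f X Y -> hom (pactm inj1 u f) (pact u X) Y.
Proof. by move=> h; have := hom_act inj1 u h; rewrite act1. Qed.
#[local] Hint Resolve hom_plus hom_act1r hom_act1l : homdb.
#[local] Hint Extern 1 (disj _ _) => djs : homdb.
Ltac djm := match goal with |- disjm ?f ?g => let H1 := fresh in let H2 := fresh in
  eassert (H1 : hom f _ _) by homs; eassert (H2 : hom g _ _) by homs; split;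
  rewrite ?(homd H1) ?(homd H2) ?(homc H1) ?(homc H2); clear H1 H2; djs end.
Ltac pc := rewrite -(ax_plus_comp ax); [ | djm | djm | cd | cd].

Lemma comp_pid_actl (u : inj) (f : pMor C) Y : pcod f = Y -> pcomp (pid Y) (pactm inj1 u f) = pactm inj1 u f.
Proof. by move=> hc; have := ax_idl ax (pactm inj1 u f); rewrite (ax_act_cod ax) act1 hc. Qed.

Lemma act_pid_sum (v u a b : inj) (X Y : pOb C) : disj (pact a X) (pact b Y) ->
  pactm v u (pid (pplus (pact a X) (pact b Y))) =
  pplusm (pactm (injM v a) (injM u a) (pid X)) (pactm (injM v b) (injM u b) (pid Y)).
Proof.
move=> d; rewrite -(ax_plus_id ax) // (ax_equiv_mor ax); last by split; rewrite ?(ax_dom_id ax) ?(ax_cod_id ax).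
by rewrite -!(ax_act_id ax) !act_act.
Qed.

Lemma phi_assoc' (X Y Z : smOb (mu_star Hmu C)) :
  smheq (s := Sigma C)
    (smcomp (fm (PhiF Hmu C) (smalpha (s := mu_star Hmu C) X Y Z))
       (smcomp (fmu (PhiF Hmu C) (smtens (s := mu_star Hmu C) X Y) Z) (smtensm (fmu (PhiF Hmu C) X Y) (smid (fo (PhiF Hmu C) Z)))))
    (smcomp (fmu (PhiF Hmu C) X (smtens (s := mu_star Hmu C) Y Z))
       (smcomp (smtensm (smid (fo (PhiF Hmu C) X)) (fmu (PhiF Hmu C) Y Z))
          (smalpha (fo (PhiF Hmu C) X) (fo (PhiF Hmu C) Y) (fo (PhiF Hmu C) Z)))).
Proof.
rewrite /=.
change (musec Hmu ord0) with m1; change (musec Hmu ord_max) with m2.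
change (push (fam [:: m1; m2]) [:: X; Y]) with (tens Hmu X Y).
change (push (fam [:: m1; m2]) [:: Y; Z]) with (tens Hmu Y Z).
set A := fam [:: m1; injM m2 m1; injM m2 m2].
set B := fam [:: injM m1 m1; injM m1 m2; m2].
set al := swp A B _.
have jA : jinj (size [:: X; Y; Z]) A.
  move=> [|[|[|a]]] [|[|[|b]]] x y //= _ _; jj.
have jB : jinj (size [:: X; Y; Z]) B.
  move=> [|[|[|a]]] [|[|[|b]]] x y //= _ _; jj.
have hal : hom al (push B [:: X; Y; Z]) (push A [:: X; Y; Z]) by exact: hom_swp.
have eB : push B [:: X; Y; Z] = tens Hmu (tens Hmu X Y) Z.
  rewrite push3 !tensE /= (ax_equiv_ob ax) ?act_mul ?(ax_assoc_ob ax) //; try dj.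
have eA : push A [:: X; Y; Z] = tens Hmu X (tens Hmu Y Z).
  rewrite push3 !tensE /= (ax_equiv_ob ax) ?act_mul //; dj.
have [a1 b1 c1] := Gm_tens (PhiMu Hmu X Y) (sig_id [:: Z]).
have [a2 b2 c2] := PhiMuE Hmu X Y; have [a3 b3 c3] := Gm_id [:: Z].
have [a4 b4 c4] := PhiMuE Hmu (tens Hmu X Y) Z.
have [a5 b5 c5] := PhiME al.
have E1 : s_tgt (sig_tensm (PhiMu Hmu X Y) (sig_id [:: Z])) = s_src (PhiMu Hmu (tens Hmu X Y) Z) by rewrite b1 b2 b3 a4.
have [f1 f2 f3] := Gm_comp E1.
have E2 : s_tgt (sig_comp (PhiMu Hmu (tens Hmu X Y) Z) (sig_tensm (PhiMu Hmu X Y) (sig_id [:: Z]))) = s_src (PhiM al).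
  by rewrite f2 b4 a5 (homd hal) eB.
have [g1 g2 g3] := Gm_comp E2.
have [a6 b6 c6] := Gm_id [:: X; Y; Z].
have [a7 b7 c7] := Gm_tens (sig_id [:: X]) (PhiMu Hmu Y Z).
have [a8 b8 c8] := Gm_id [:: X]; have [a9 b9 c9] := PhiMuE Hmu Y Z.
have [a10 b10 c10] := PhiMuE Hmu X (tens Hmu Y Z).
have E3 : s_tgt (sig_id [:: X; Y; Z]) = s_src (sig_tensm (sig_id [:: X]) (PhiMu Hmu Y Z)) by rewrite b6 a7 a8 a9.
have [h1 h2 h3] := Gm_comp E3.
have E4 : s_tgt (sig_comp (sig_tensm (sig_id [:: X]) (PhiMu Hmu Y Z)) (sig_id [:: X; Y; Z])) = s_src (PhiMu Hmu X (tens Hmu Y Z)).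
  by rewrite h2 b7 b8 b9 a10.
have [k1 k2 k3] := Gm_comp E4.
have hT2 := hom_Gm (sig_tensm (sig_id [:: X]) (PhiMu Hmu Y Z)).
rewrite a7 a8 a9 in hT2.
apply: Gm_heq; rewrite ?g1 ?g2 ?g3 ?k1 ?k2 ?k3 ?f1 ?f2 ?f3 ?h1 ?h2 ?h3.
- by rewrite a1 a2 a3 a6.
- by rewrite b5 b10 (homc hal) eA.
rewrite c6 (comp_idr hT2).
rewrite c5 c4 c10 c1 c7 c2 c3 c8 c9 a2 b2 a3 b3 a8 b8 a9 b9 /=.
have j3 := @jinj_R 3.
have j32 : jinj (size [:: X; Y]) (R (2 + 1)) by apply: (jinj_le (m := 3)).
have j32' : jinj (size [:: Y; Z]) (fun a => R (1 + 2) (a + 1)) by exact: (jinj_split_r (n := 1) (m := 2)).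
have jM := @jinj_MM _ Hmu.
have jR2 := @jinj_R 2.
rewrite !swp_comp //.
set N := pplusm (pactm m1 (canon 3 0) (pid X))
           (pplusm (pactm (injM m2 m1) (canon 3 1) (pid Y)) (pactm (injM m2 m2) (canon 3 2) (pid Z))).
transitivity N.
  rewrite /al !swp3 !swp2 !swp1 /R /MM /A /B /= Pl1.
  change (musec Hmu ord0) with m1; change (musec Hmu ord_max) with m2.
  rewrite comp_pid_actl ?(ax_cod_id ax) // act_comp ?(ax_cod_id ax) ?(ax_dom_id ax) ?act1 //.
  try (change (1 + 1) with 2); try (change (2 + 1) with 3); try (change (0 + 1) with 1);
  try (change (0 + 2) with 2); try (change (1 + 2) with 3).
  rewrite (comp_idl (hom_pid Z)) !tensE.
  pc.
  rewrite compA2; [| cd | cd].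
  rewrite act_comp ?(ax_cod_id ax) ?(ax_dom_id ax) // (comp_idl (hom_pid _)).
  rewrite act_comp ?(ax_cod_id ax) ?(ax_dom_id ax) // (comp_idl (hom_pid _)).
  rewrite act_pid_sum; last by djs.
  rewrite !injM1u.
  rewrite -[W in pplusm W (pactm m2 _ _)](ax_plus_comp ax); [| djm | djm | cd | cd].
  rewrite !act_comp ?(ax_cod_id ax) ?(ax_dom_id ax) // !(comp_idl (hom_pid _)).
  rewrite (ax_assoc_mor ax); [| djm | djm | djm].
  pc. pc.
  rewrite !act_comp ?(ax_cod_id ax) ?(ax_dom_id ax) // !(comp_idl (hom_pid _)).
  done.
rewrite !swp2 !swp1 /R /MM /= Pl1.
change (musec Hmu ord0) with m1; change (musec Hmu ord_max) with m2.
try (change (1 + 1) with 2); try (change (2 + 1) with 3); try (change (0 + 1) with 1);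
try (change (0 + 2) with 2); try (change (1 + 2) with 3).
rewrite !tensE comp_pid_actl ?(ax_cod_id ax) // act_comp ?(ax_cod_id ax) ?(ax_dom_id ax) ?act1 //.
rewrite (comp_idl (hom_pid X)).
pc.
rewrite compA2; [| cd | cd].
rewrite !act_comp ?(ax_cod_id ax) ?(ax_dom_id ax) // !(comp_idl (hom_pid _)).
rewrite act_pid_sum; last by djs.
rewrite !injM1u.
pc.
rewrite !act_comp ?(ax_cod_id ax) ?(ax_dom_id ax) // !(comp_idl (hom_pid _)).
by rewrite /N.
Qed.
End T5.

Section Fin.
Variable mu : 'I_2 * nat -> nat.
Hypothesis Hmu : injective mu.

Lemma phi_ssm_fin (C : PCat) : strong_sym_monoidal (PhiF Hmu C).
Proof.
split.
- exact: phi_functor.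
- by move=> X Y /=; have [a b _] := PhiMuE Hmu X Y; split.
- exact: phi_mu_iso.
- by have [a b _] := PhiEpsE C; split.
- exact: phi_eps_iso.
- exact: phi_mu_nat'.
- exact: phi_assoc'.
- exact: phi_unitl'.
- exact: phi_unitr'.
- exact: phi_sym'.
Qed.
End Fin.

Theorem proposition2p10 (mu : 'I_2 * nat -> nat) (Hmu : injective mu) :
  exists Phi : forall C : PCat, SMFun (mu_star Hmu C) (Sigma C),
    (forall C : PCat, strong_sym_monoidal (Phi C) /\ cat_equivalence (Phi C)) /\
    (forall (C D : PCat) (F : PMor C D),
       smf_eq (smf_comp (Sigma_fun F) (Phi C))
              (smf_comp (Phi D) (mu_star_fun Hmu F))).
Proof.
exists (PhiF Hmu); split; last exact: phi_nat.
by move=> C; split; [exact: phi_ssm_fin | exact: phi_equiv].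
Qed.
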